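(* Consider an edge-to-edge tiling of a surface in which every corner of every tile carries a positive real number (its angle), such that the angles at every vertex sum to $2\pi$. Suppose the number $k$ of distinct angle values occurring at degree $3$ vertices satisfies $1\le k\le 5$, and let $S$ be the set of angle combinations occurring at degree $3$ vertices. Then, after suitably naming these $k$ distinct values by $\alpha,\beta,\gamma,\delta,\epsilon$ (the first $k$ of these letters), there is a row $(N;O)$ in the following list with exactly $k$ letters such that $N\subseteq S\subseteq N\cup O$: $k=1$: $(\{\alpha^3\};\emptyset)$. $k=2$: $(\{\alpha\beta^2\};\emptyset)$. $k=3$: $(\{\alpha\beta\gamma\};\{\alpha^3\})$; $(\{\alpha\beta^2,\alpha^2\gamma\};\emptyset)$; $(\{\alpha\beta^2,\gamma^3\};\emptyset)$. $k=4$: $(\{\alpha\beta\gamma,\alpha\delta^2\};\{\beta^2\delta\})$; $(\{\alpha\beta\gamma,\alpha\delta^2\};\{\beta^3\})$; $(\{\alpha\beta\gamma,\alpha^2\delta\};\{\beta\delta^2\})$; $(\{\alpha\beta\gamma,\alpha^2\delta\};\{\beta^3\})$; $(\{\alpha\beta\gamma,\delta^3\};\emptyset)$; $(\{\alpha\beta^2,\gamma\delta^2\};\{\alpha^2\delta\})$; $(\{\alpha\beta^2,\alpha^2\gamma,\delta^3\};\emptyset)$. $k=5$: with $N=\{\alpha\beta\gamma,\alpha\delta\epsilon\}$: $O=\{\beta\delta^2,\beta^2\epsilon\}$, $\{\beta\delta^2,\gamma\epsilon^2,\alpha^3\}$, $\{\beta\delta^2,\gamma^2\epsilon\}$, $\{\beta\delta^2,\gamma^3\}$,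 or $\{\beta\delta^2,\epsilon^3\}$; with $N=\{\alpha\beta\gamma,\alpha\delta^2,\alpha^2\epsilon\}$: $O=\{\beta\epsilon^2\}$, $\{\beta^2\delta\}$, or $\{\beta^3\}$; with $N=\{\alpha\beta\gamma,\alpha\delta^2,\beta\epsilon^2\}$: $O=\{\alpha^2\epsilon\}$, $\{\gamma^2\delta\}$, or $\{\gamma^3\}$; with $N=\{\alpha\beta\gamma,\alpha\delta^2,\beta^2\epsilon\}$: $O=\{\gamma\epsilon^2\}$, $\{\gamma^2\delta\}$, or $\{\gamma^3\}$; with $N=\{\alpha\beta\gamma,\alpha\delta^2,\delta\epsilon^2\}$: $O=\{\beta^2\epsilon\}$ or $\{\beta^3\}$; with $N=\{\alpha\beta\gamma,\alpha\delta^2,\epsilon^3\}$: $O=\{\beta^2\delta\}$; with $N=\{\alpha\beta\gamma,\alpha^2\delta,\beta^2\epsilon\}$: $O=\{\alpha\epsilon^2\}$, $\{\gamma\delta^2\}$, or $\{\gamma^3\}$; with $N=\{\alpha\beta\gamma,\alpha^2\delta,\delta^2\epsilon\}$: $O=\{\beta^2\epsilon\}$ or $\{\beta^3\}$; with $N=\{\alpha\beta\gamma,\alpha^2\delta,\epsilon^3\}$: $O=\{\beta\delta^2\}$; with $N=\{\alpha\beta\gamma,\delta\epsilon^2\}$: $O=\{\alpha^3\}$; with $N=\{\alpha\beta^2,\gamma\delta^2,\alpha^2\epsilon\}$: $O=\{\beta\gamma^2\}$ or $\{\delta\epsilon^2\}$; with $N=\{\alpha\beta^2,\gamma\delta^2,\epsilon^3\}$: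 $O=\{\alpha^2\delta\}$.
   Context: An angle combination at a degree $3$ vertex is the multiset of the three angle values at its corners, written multiplicatively: e.g. $\alpha\beta^2$ denotes a degree $3$ vertex whose corners have angles $\alpha,\beta,\beta$, and $\alpha^3$ one whose three corners all have angle $\alpha$. The letters $\alpha,\beta,\gamma,\delta,\epsilon$ denote pairwise distinct real numbers. In each row, $N$ is the ''necessary part'' and $O$ the ''optional part''. *)

(* Defs.v *)
From Stdlib Require Import Reals List Permutation Arith.
Import ListNotations.
Open Scope R_scope.

(* A tiling is abstracted by its vertex/corner angle data:
   [corners v] is the list of the angles at the corners around vertex v
   (one entry per corner, so the degree of v is [length (corners v)]). *)

(* Letters: alpha = 0, beta = 1, gamma = 2, delta = 3, epsilon = 4.
   An angle combination at a degree 3 vertex is a list of three letters,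
   understood up to permutation (a multiset). *)
Definition combo := list nat.

(* A row (k; N; O): number of letters, necessary part, optional part. *)
Definition row := (nat * list combo * list combo)%type.

Definition rows : list row := ([
  (1%nat, [[0;0;0]], []);
  (2%nat, [[0;1;1]], []);
  (3%nat, [[0;1;2]], [[0;0;0]]);
  (3%nat, [[0;1;1]; [0;0;2]], []);
  (3%nat, [[0;1;1]; [2;2;2]], []);
  (4%nat, [[0;1;2]; [0;3;3]], [[1;1;3]]);
  (4%nat, [[0;1;2]; [0;3;3]], [[1;1;1]]);
  (4%nat, [[0;1;2]; [0;0;3]], [[1;3;3]]);
  (4%nat, [[0;1;2]; [0;0;3]], [[1;1;1]]);
  (4%nat, [[0;1;2]; [3;3;3]], []);
  (4%nat, [[0;1;1]; [2;3;3]], [[0;0;3]]);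
  (4%nat, [[0;1;1]; [0;0;2]; [3;3;3]], []);
  (5%nat, [[0;1;2]; [0;3;4]], [[1;3;3]; [1;1;4]]);
  (5%nat, [[0;1;2]; [0;3;4]], [[1;3;3]; [2;4;4]; [0;0;0]]);
  (5%nat, [[0;1;2]; [0;3;4]], [[1;3;3]; [2;2;4]]);
  (5%nat, [[0;1;2]; [0;3;4]], [[1;3;3]; [2;2;2]]);
  (5%nat, [[0;1;2]; [0;3;4]], [[1;3;3]; [4;4;4]]);
  (5%nat, [[0;1;2]; [0;3;3]; [0;0;4]], [[1;4;4]]);
  (5%nat, [[0;1;2]; [0;3;3]; [0;0;4]], [[1;1;3]]);
  (5%nat, [[0;1;2]; [0;3;3]; [0;0;4]], [[1;1;1]]);
  (5%nat, [[0;1;2]; [0;3;3]; [1;4;4]], [[0;0;4]]);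
  (5%nat, [[0;1;2]; [0;3;3]; [1;4;4]], [[2;2;3]]);
  (5%nat, [[0;1;2]; [0;3;3]; [1;4;4]], [[2;2;2]]);
  (5%nat, [[0;1;2]; [0;3;3]; [1;1;4]], [[2;4;4]]);
  (5%nat, [[0;1;2]; [0;3;3]; [1;1;4]], [[2;2;3]]);
  (5%nat, [[0;1;2]; [0;3;3]; [1;1;4]], [[2;2;2]]);
  (5%nat, [[0;1;2]; [0;3;3]; [3;4;4]], [[1;1;4]]);
  (5%nat, [[0;1;2]; [0;3;3]; [3;4;4]], [[1;1;1]]);
  (5%nat, [[0;1;2]; [0;3;3]; [4;4;4]], [[1;1;3]]);
  (5%nat, [[0;1;2]; [0;0;3]; [1;1;4]], [[0;4;4]]);
  (5%nat, [[0;1;2]; [0;0;3]; [1;1;4]], [[2;3;3]]);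
  (5%nat, [[0;1;2]; [0;0;3]; [1;1;4]], [[2;2;2]]);
  (5%nat, [[0;1;2]; [0;0;3]; [3;3;4]], [[1;1;4]]);
  (5%nat, [[0;1;2]; [0;0;3]; [3;3;4]], [[1;1;1]]);
  (5%nat, [[0;1;2]; [0;0;3]; [4;4;4]], [[1;3;3]]);
  (5%nat, [[0;1;2]; [3;4;4]], [[0;0;0]]);
  (5%nat, [[0;1;1]; [2;3;3]; [0;0;4]], [[1;2;2]]);
  (5%nat, [[0;1;1]; [2;3;3]; [0;0;4]], [[3;4;4]]);
  (5%nat, [[0;1;1]; [2;3;3]; [4;4;4]], [[0;0;3]])
])%nat.

Definition deg3_value {V : Type} (corners : V -> list R) (x : R) : Prop :=
  exists v, length (corners v) = 3%nat /\ In x (corners v).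

Definition occurs {V : Type} (corners : V -> list R) (name : nat -> R) (t : combo) : Prop :=
  exists v, length (corners v) = 3%nat /\ Permutation (corners v) (map name t).

(* Main.v *)
Require Import Defs.
From Stdlib Require Import Reals List Permutation Arith Lra Lia Bool Classical.
Import ListNotations.
Open Scope R_scope.

Fixpoint ceqb (c d : combo) : bool :=
  match c, d with
  | [], [] => true
  | a :: c', b :: d' => if Nat.eqb a b then ceqb c' d' else false
  | _, _ => false
  end.
Lemma ceqb_eq c d : ceqb c d = true <-> c = d.
Proof.
  revert d; induction c as [|a c IH]; destruct d as [|b d]; simpl; try (split; congruence).
  destruct (Nat.eqb a b) eqn:E.
  - apply Nat.eqb_eq in E; subst. rewrite IH. split; congruence.
  - apply Nat.eqb_neq in E. split; congruence.
Qed.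
Fixpoint memc (c : combo) (L : list combo) : bool :=
  match L with [] => false | d :: L' => if ceqb c d then true else memc c L' end.
Lemma memc_In c L : memc c L = true <-> In c L.
Proof.
  induction L as [|d L IH]; simpl. split; [discriminate|tauto].
  destruct (ceqb c d) eqn:E.
  - apply ceqb_eq in E; subst. split; auto.
  - rewrite IH. split; [tauto|]. intros [H|H]; auto. subst. 
    assert (ceqb c c = true) by (apply ceqb_eq; auto). congruence.
Qed.
Fixpoint insn (a : nat) (l : list nat) : list nat :=
  match l with [] => [a] | b :: t => if Nat.leb a b then a :: b :: t else b :: insn a t end.
Fixpoint csort (l : list nat) : list nat :=
  match l with [] => [] | a :: t => insn a (csort t) end.
Lemma insn_perm a l : Permutation (insn a l) (a :: l).
Proof.
  induction l as [|b t IH]; simpl; auto.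
  destruct (Nat.leb a b); auto.
  eapply perm_trans; [apply perm_skip, IH|apply perm_swap].
Qed.
Lemma csort_perm l : Permutation (csort l) l.
Proof.
  induction l as [|a t IH]; simpl; auto.
  eapply perm_trans; [apply insn_perm|apply perm_skip, IH].
Qed.

Definition allc (k : nat) : list combo :=
  flat_map (fun a => flat_map (fun b => map (fun c => [a;b;c]) (seq b (k-b))) (seq a (k-a))) (seq 0 k).

Definition ltb_all (k : nat) (c : list nat) := forallb (fun i => Nat.ltb i k) c.

Definition allc_check : bool :=
  forallb (fun k => forallb (fun a => forallb (fun b => forallb (fun d =>
     memc (csort [a;b;d]) (allc k)) (seq 0 k)) (seq 0 k)) (seq 0 k)) [1;2;3;4;5]%nat.
Lemma allc_check_ok : allc_check = true. Proof. vm_compute. reflexivity. Qed.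

Definition sumc (xv : nat -> R) (c : combo) : R := fold_right Rplus 0 (map xv c).
Fixpoint all_hold (xv : nat -> R) (B : list combo) : Prop :=
  match B with [] => True | b :: B' => sumc xv b = 2 * PI /\ all_hold xv B' end.
Definition badall : list (list combo * nat * nat) := ([
  ([[0;0;0];[0;0;1]], 0, 1);
  ([[0;0;0];[0;0;2]], 0, 2);
  ([[0;0;0];[0;0;3]], 0, 3);
  ([[0;0;0];[0;0;4]], 0, 4);
  ([[0;0;0];[0;1;1]], 0, 1);
  ([[0;0;0];[0;1;2];[1;1;3];[1;4;4];[2;3;4]], 0, 1);
  ([[0;0;0];[0;1;2];[1;1;3];[2;3;3]], 0, 1);
  ([[0;0;0];[0;1;2];[1;1;3];[2;4;4];[3;3;4]], 0, 1);
  ([[0;0;0];[0;1;2];[1;1;4];[1;3;3];[2;3;4]], 0, 1);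
  ([[0;0;0];[0;1;2];[1;1;4];[2;3;3];[3;4;4]], 0, 1);
  ([[0;0;0];[0;1;2];[1;1;4];[2;4;4]], 0, 1);
  ([[0;0;0];[0;1;2];[1;3;3];[2;2;3]], 0, 1);
  ([[0;0;0];[0;1;2];[1;3;3];[2;2;4];[3;4;4]], 0, 1);
  ([[0;0;0];[0;1;2];[1;3;4];[2;2;3];[2;4;4]], 0, 1);
  ([[0;0;0];[0;1;2];[1;3;4];[2;2;4];[2;3;3]], 0, 1);
  ([[0;0;0];[0;1;2];[1;4;4];[2;2;3];[3;3;4]], 0, 1);
  ([[0;0;0];[0;1;2];[1;4;4];[2;2;4]], 0, 1);
  ([[0;0;0];[0;1;3];[1;1;2];[1;4;4];[2;3;4]], 0, 1);
  ([[0;0;0];[0;1;3];[1;1;2];[2;2;3]], 0, 1);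
  ([[0;0;0];[0;1;3];[1;1;2];[2;2;4];[3;4;4]], 0, 1);
  ([[0;0;0];[0;1;3];[1;1;4];[1;2;2];[2;3;4]], 0, 1);
  ([[0;0;0];[0;1;3];[1;1;4];[2;2;3];[2;4;4]], 0, 1);
  ([[0;0;0];[0;1;3];[1;1;4];[3;4;4]], 0, 1);
  ([[0;0;0];[0;1;3];[1;2;2];[2;3;3]], 0, 1);
  ([[0;0;0];[0;1;3];[1;2;2];[2;4;4];[3;3;4]], 0, 1);
  ([[0;0;0];[0;1;3];[1;2;4];[2;2;3];[3;3;4]], 0, 1);
  ([[0;0;0];[0;1;3];[1;2;4];[2;3;3];[3;4;4]], 0, 1);
  ([[0;0;0];[0;1;3];[1;4;4];[2;2;4];[2;3;3]], 0, 1);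
  ([[0;0;0];[0;1;3];[1;4;4];[3;3;4]], 0, 1);
  ([[0;0;0];[0;1;4];[1;1;2];[1;3;3];[2;3;4]], 0, 1);
  ([[0;0;0];[0;1;4];[1;1;2];[2;2;3];[3;3;4]], 0, 1);
  ([[0;0;0];[0;1;4];[1;1;2];[2;2;4]], 0, 1);
  ([[0;0;0];[0;1;4];[1;1;3];[1;2;2];[2;3;4]], 0, 1);
  ([[0;0;0];[0;1;4];[1;1;3];[2;2;4];[2;3;3]], 0, 1);
  ([[0;0;0];[0;1;4];[1;1;3];[3;3;4]], 0, 1);
  ([[0;0;0];[0;1;4];[1;2;2];[2;3;3];[3;4;4]], 0, 1);
  ([[0;0;0];[0;1;4];[1;2;2];[2;4;4]], 0, 1);
  ([[0;0;0];[0;1;4];[1;2;3];[2;2;4];[3;4;4]], 0, 1);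
  ([[0;0;0];[0;1;4];[1;2;3];[2;4;4];[3;3;4]], 0, 1);
  ([[0;0;0];[0;1;4];[1;3;3];[2;2;3];[2;4;4]], 0, 1);
  ([[0;0;0];[0;1;4];[1;3;3];[3;4;4]], 0, 1);
  ([[0;0;0];[0;2;2]], 0, 2);
  ([[0;0;0];[0;2;3];[1;1;2];[1;3;3]], 0, 1);
  ([[0;0;0];[0;2;3];[1;1;2];[1;3;4];[2;2;4]], 0, 1);
  ([[0;0;0];[0;2;3];[1;1;2];[1;4;4];[3;3;4]], 0, 1);
  ([[0;0;0];[0;2;3];[1;1;3];[1;2;2]], 0, 1);
  ([[0;0;0];[0;2;3];[1;1;3];[1;2;4];[3;3;4]], 0, 1);
  ([[0;0;0];[0;2;3];[1;1;3];[1;4;4];[2;2;4]], 0, 1);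
  ([[0;0;0];[0;2;3];[1;1;4];[1;2;2];[3;4;4]], 0, 1);
  ([[0;0;0];[0;2;3];[1;1;4];[1;3;3];[2;4;4]], 0, 1);
  ([[0;0;0];[0;2;3];[1;2;2];[1;3;4];[2;4;4]], 0, 1);
  ([[0;0;0];[0;2;3];[1;2;4];[1;3;3];[3;4;4]], 0, 1);
  ([[0;0;0];[0;2;3];[2;2;4];[3;4;4]], 0, 2);
  ([[0;0;0];[0;2;3];[2;4;4];[3;3;4]], 0, 2);
  ([[0;0;0];[0;2;4];[1;1;2];[1;3;3];[3;4;4]], 0, 1);
  ([[0;0;0];[0;2;4];[1;1;2];[1;3;4];[2;2;3]], 0, 1);
  ([[0;0;0];[0;2;4];[1;1;2];[1;4;4]], 0, 1);
  ([[0;0;0];[0;2;4];[1;1;3];[1;2;2];[3;3;4]], 0, 1);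
  ([[0;0;0];[0;2;4];[1;1;3];[1;4;4];[2;3;3]], 0, 1);
  ([[0;0;0];[0;2;4];[1;1;4];[1;2;2]], 0, 1);
  ([[0;0;0];[0;2;4];[1;1;4];[1;2;3];[3;4;4]], 0, 1);
  ([[0;0;0];[0;2;4];[1;1;4];[1;3;3];[2;2;3]], 0, 1);
  ([[0;0;0];[0;2;4];[1;2;2];[1;3;4];[2;3;3]], 0, 1);
  ([[0;0;0];[0;2;4];[1;2;3];[1;4;4];[3;3;4]], 0, 1);
  ([[0;0;0];[0;2;4];[2;2;3];[3;3;4]], 0, 2);
  ([[0;0;0];[0;2;4];[2;3;3];[3;4;4]], 0, 2);
  ([[0;0;0];[0;3;3]], 0, 3);
  ([[0;0;0];[0;3;4];[1;1;2];[1;3;3];[2;2;4]], 0, 1);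
  ([[0;0;0];[0;3;4];[1;1;2];[1;4;4];[2;2;3]], 0, 1);
  ([[0;0;0];[0;3;4];[1;1;3];[1;2;2];[2;4;4]], 0, 1);
  ([[0;0;0];[0;3;4];[1;1;3];[1;2;4];[2;3;3]], 0, 1);
  ([[0;0;0];[0;3;4];[1;1;3];[1;4;4]], 0, 1);
  ([[0;0;0];[0;3;4];[1;1;4];[1;2;2];[2;3;3]], 0, 1);
  ([[0;0;0];[0;3;4];[1;1;4];[1;2;3];[2;4;4]], 0, 1);
  ([[0;0;0];[0;3;4];[1;1;4];[1;3;3]], 0, 1);
  ([[0;0;0];[0;3;4];[1;2;3];[1;4;4];[2;2;4]], 0, 1);
  ([[0;0;0];[0;3;4];[1;2;4];[1;3;3];[2;2;3]], 0, 1);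
  ([[0;0;0];[0;3;4];[2;2;3];[2;4;4]], 0, 2);
  ([[0;0;0];[0;3;4];[2;2;4];[2;3;3]], 0, 2);
  ([[0;0;0];[0;4;4]], 0, 4);
  ([[0;0;0];[1;1;1]], 0, 1);
  ([[0;0;0];[2;2;2]], 0, 2);
  ([[0;0;0];[3;3;3]], 0, 3);
  ([[0;0;0];[4;4;4]], 0, 4);
  ([[0;0;1];[0;0;2]], 1, 2);
  ([[0;0;1];[0;0;3]], 1, 3);
  ([[0;0;1];[0;0;4]], 1, 4);
  ([[0;0;1];[0;1;1]], 0, 1);
  ([[0;0;1];[0;1;2]], 0, 2);
  ([[0;0;1];[0;1;3]], 0, 3);
  ([[0;0;1];[0;1;4]], 0, 4);
  ([[0;0;1];[0;2;2];[0;3;4];[1;1;3];[1;2;4]], 0, 1);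
  ([[0;0;1];[0;2;2];[0;3;4];[1;1;3];[2;4;4]], 0, 1);
  ([[0;0;1];[0;2;2];[0;3;4];[1;1;4];[1;2;3]], 0, 1);
  ([[0;0;1];[0;2;2];[0;3;4];[1;1;4];[2;3;3]], 0, 1);
  ([[0;0;1];[0;2;2];[0;3;4];[1;2;3];[2;4;4]], 0, 1);
  ([[0;0;1];[0;2;2];[0;3;4];[1;2;3];[4;4;4]], 0, 1);
  ([[0;0;1];[0;2;2];[0;3;4];[1;2;4];[2;3;3]], 0, 1);
  ([[0;0;1];[0;2;2];[0;3;4];[1;2;4];[3;3;3]], 0, 1);
  ([[0;0;1];[0;2;2];[1;1;2]], 0, 1);
  ([[0;0;1];[0;2;2];[1;1;3];[1;2;4];[3;3;4]], 0, 1);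
  ([[0;0;1];[0;2;2];[1;1;3];[2;3;3]], 0, 1);
  ([[0;0;1];[0;2;2];[1;1;3];[2;3;4];[4;4;4]], 0, 1);
  ([[0;0;1];[0;2;2];[1;1;3];[2;4;4];[3;3;4]], 0, 1);
  ([[0;0;1];[0;2;2];[1;1;4];[1;2;3];[3;4;4]], 0, 1);
  ([[0;0;1];[0;2;2];[1;1;4];[2;3;3];[3;4;4]], 0, 1);
  ([[0;0;1];[0;2;2];[1;1;4];[2;3;4];[3;3;3]], 0, 1);
  ([[0;0;1];[0;2;2];[1;1;4];[2;4;4]], 0, 1);
  ([[0;0;1];[0;2;2];[1;2;3];[2;4;4];[3;3;4]], 0, 1);
  ([[0;0;1];[0;2;2];[1;2;3];[3;3;3]], 0, 1);
  ([[0;0;1];[0;2;2];[1;2;4];[2;3;3];[3;4;4]], 0, 1);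
  ([[0;0;1];[0;2;2];[1;2;4];[4;4;4]], 0, 1);
  ([[0;0;1];[0;2;2];[1;3;4];[2;3;3];[4;4;4]], 0, 1);
  ([[0;0;1];[0;2;2];[1;3;4];[2;4;4];[3;3;3]], 0, 1);
  ([[0;0;1];[0;2;3];[0;4;4];[1;1;2];[1;3;4]], 0, 1);
  ([[0;0;1];[0;2;3];[0;4;4];[1;1;2];[3;3;4]], 0, 1);
  ([[0;0;1];[0;2;3];[0;4;4];[1;1;3];[1;2;4]], 0, 1);
  ([[0;0;1];[0;2;3];[0;4;4];[1;1;3];[2;2;4]], 0, 1);
  ([[0;0;1];[0;2;3];[0;4;4];[1;2;4];[3;3;3]], 0, 1);
  ([[0;0;1];[0;2;3];[0;4;4];[1;2;4];[3;3;4]], 0, 1);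
  ([[0;0;1];[0;2;3];[0;4;4];[1;3;4];[2;2;2]], 0, 1);
  ([[0;0;1];[0;2;3];[0;4;4];[1;3;4];[2;2;4]], 0, 1);
  ([[0;0;1];[0;2;3];[1;1;2];[1;3;4];[2;2;4]], 0, 1);
  ([[0;0;1];[0;2;3];[1;1;2];[1;3;4];[4;4;4]], 0, 1);
  ([[0;0;1];[0;2;3];[1;1;2];[2;2;4];[3;4;4]], 0, 1);
  ([[0;0;1];[0;2;3];[1;1;2];[3;3;3]], 0, 1);
  ([[0;0;1];[0;2;3];[1;1;3];[1;2;4];[3;3;4]], 0, 1);
  ([[0;0;1];[0;2;3];[1;1;3];[1;2;4];[4;4;4]], 0, 1);
  ([[0;0;1];[0;2;3];[1;1;3];[2;2;2]], 0, 1);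
  ([[0;0;1];[0;2;3];[1;1;3];[2;4;4];[3;3;4]], 0, 1);
  ([[0;0;1];[0;2;3];[1;1;4];[2;2;2];[3;4;4]], 0, 1);
  ([[0;0;1];[0;2;3];[1;1;4];[2;4;4];[3;3;3]], 0, 1);
  ([[0;0;1];[0;2;3];[1;2;4];[3;4;4]], 0, 2);
  ([[0;0;1];[0;2;3];[1;3;4];[2;4;4]], 0, 3);
  ([[0;0;1];[0;2;4];[0;3;3];[1;1;2];[1;3;4]], 0, 1);
  ([[0;0;1];[0;2;4];[0;3;3];[1;1;2];[3;4;4]], 0, 1);
  ([[0;0;1];[0;2;4];[0;3;3];[1;1;4];[1;2;3]], 0, 1);
  ([[0;0;1];[0;2;4];[0;3;3];[1;1;4];[2;2;3]], 0, 1);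
  ([[0;0;1];[0;2;4];[0;3;3];[1;2;3];[3;4;4]], 0, 1);
  ([[0;0;1];[0;2;4];[0;3;3];[1;2;3];[4;4;4]], 0, 1);
  ([[0;0;1];[0;2;4];[0;3;3];[1;3;4];[2;2;2]], 0, 1);
  ([[0;0;1];[0;2;4];[0;3;3];[1;3;4];[2;2;3]], 0, 1);
  ([[0;0;1];[0;2;4];[1;1;2];[1;3;4];[2;2;3]], 0, 1);
  ([[0;0;1];[0;2;4];[1;1;2];[1;3;4];[3;3;3]], 0, 1);
  ([[0;0;1];[0;2;4];[1;1;2];[2;2;3];[3;3;4]], 0, 1);
  ([[0;0;1];[0;2;4];[1;1;2];[4;4;4]], 0, 1);
  ([[0;0;1];[0;2;4];[1;1;3];[2;2;2];[3;3;4]], 0, 1);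
  ([[0;0;1];[0;2;4];[1;1;3];[2;3;3];[4;4;4]], 0, 1);
  ([[0;0;1];[0;2;4];[1;1;4];[1;2;3];[3;3;3]], 0, 1);
  ([[0;0;1];[0;2;4];[1;1;4];[1;2;3];[3;4;4]], 0, 1);
  ([[0;0;1];[0;2;4];[1;1;4];[2;2;2]], 0, 1);
  ([[0;0;1];[0;2;4];[1;1;4];[2;3;3];[3;4;4]], 0, 1);
  ([[0;0;1];[0;2;4];[1;2;3];[3;3;4]], 0, 2);
  ([[0;0;1];[0;2;4];[1;3;4];[2;3;3]], 0, 3);
  ([[0;0;1];[0;3;3];[1;1;2];[1;3;4];[2;2;4]], 0, 1);
  ([[0;0;1];[0;3;3];[1;1;2];[2;2;3]], 0, 1);
  ([[0;0;1];[0;3;3];[1;1;2];[2;2;4];[3;4;4]], 0, 1);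
  ([[0;0;1];[0;3;3];[1;1;2];[2;3;4];[4;4;4]], 0, 1);
  ([[0;0;1];[0;3;3];[1;1;3]], 0, 1);
  ([[0;0;1];[0;3;3];[1;1;4];[1;2;3];[2;4;4]], 0, 1);
  ([[0;0;1];[0;3;3];[1;1;4];[2;2;2];[2;3;4]], 0, 1);
  ([[0;0;1];[0;3;3];[1;1;4];[2;2;3];[2;4;4]], 0, 1);
  ([[0;0;1];[0;3;3];[1;1;4];[3;4;4]], 0, 1);
  ([[0;0;1];[0;3;3];[1;2;3];[2;2;2]], 0, 1);
  ([[0;0;1];[0;3;3];[1;2;3];[2;2;4];[3;4;4]], 0, 1);
  ([[0;0;1];[0;3;3];[1;2;4];[2;2;2];[3;4;4]], 0, 1);
  ([[0;0;1];[0;3;3];[1;2;4];[2;2;3];[4;4;4]], 0, 1);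
  ([[0;0;1];[0;3;3];[1;3;4];[2;2;3];[2;4;4]], 0, 1);
  ([[0;0;1];[0;3;3];[1;3;4];[4;4;4]], 0, 1);
  ([[0;0;1];[0;3;4];[1;1;2];[2;2;3];[4;4;4]], 0, 1);
  ([[0;0;1];[0;3;4];[1;1;2];[2;2;4];[3;3;3]], 0, 1);
  ([[0;0;1];[0;3;4];[1;1;3];[1;2;4];[2;2;2]], 0, 1);
  ([[0;0;1];[0;3;4];[1;1;3];[1;2;4];[2;3;3]], 0, 1);
  ([[0;0;1];[0;3;4];[1;1;3];[2;2;4];[2;3;3]], 0, 1);
  ([[0;0;1];[0;3;4];[1;1;3];[4;4;4]], 0, 1);
  ([[0;0;1];[0;3;4];[1;1;4];[1;2;3];[2;2;2]], 0, 1);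
  ([[0;0;1];[0;3;4];[1;1;4];[1;2;3];[2;4;4]], 0, 1);
  ([[0;0;1];[0;3;4];[1;1;4];[2;2;3];[2;4;4]], 0, 1);
  ([[0;0;1];[0;3;4];[1;1;4];[3;3;3]], 0, 1);
  ([[0;0;1];[0;3;4];[1;2;3];[2;2;4]], 0, 2);
  ([[0;0;1];[0;3;4];[1;2;4];[2;2;3]], 0, 2);
  ([[0;0;1];[0;4;4];[1;1;2];[1;3;4];[2;2;3]], 0, 1);
  ([[0;0;1];[0;4;4];[1;1;2];[2;2;3];[3;3;4]], 0, 1);
  ([[0;0;1];[0;4;4];[1;1;2];[2;2;4]], 0, 1);
  ([[0;0;1];[0;4;4];[1;1;2];[2;3;4];[3;3;3]], 0, 1);
  ([[0;0;1];[0;4;4];[1;1;3];[1;2;4];[2;3;3]], 0, 1);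
  ([[0;0;1];[0;4;4];[1;1;3];[2;2;2];[2;3;4]], 0, 1);
  ([[0;0;1];[0;4;4];[1;1;3];[2;2;4];[2;3;3]], 0, 1);
  ([[0;0;1];[0;4;4];[1;1;3];[3;3;4]], 0, 1);
  ([[0;0;1];[0;4;4];[1;1;4]], 0, 1);
  ([[0;0;1];[0;4;4];[1;2;3];[2;2;2];[3;3;4]], 0, 1);
  ([[0;0;1];[0;4;4];[1;2;3];[2;2;4];[3;3;3]], 0, 1);
  ([[0;0;1];[0;4;4];[1;2;4];[2;2;2]], 0, 1);
  ([[0;0;1];[0;4;4];[1;2;4];[2;2;3];[3;3;4]], 0, 1);
  ([[0;0;1];[0;4;4];[1;3;4];[2;2;4];[2;3;3]], 0, 1);
  ([[0;0;1];[0;4;4];[1;3;4];[3;3;3]], 0, 1);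
  ([[0;0;1];[1;1;1]], 0, 1);
  ([[0;0;1];[1;2;2]], 0, 2);
  ([[0;0;1];[1;3;3]], 0, 3);
  ([[0;0;1];[1;4;4]], 0, 4);
  ([[0;0;2];[0;0;3]], 2, 3);
  ([[0;0;2];[0;0;4]], 2, 4);
  ([[0;0;2];[0;1;1];[0;3;4];[1;2;3];[1;4;4]], 0, 1);
  ([[0;0;2];[0;1;1];[0;3;4];[1;2;3];[2;2;4]], 0, 1);
  ([[0;0;2];[0;1;1];[0;3;4];[1;2;3];[4;4;4]], 0, 1);
  ([[0;0;2];[0;1;1];[0;3;4];[1;2;4];[1;3;3]], 0, 1);
  ([[0;0;2];[0;1;1];[0;3;4];[1;2;4];[2;2;3]], 0, 1);
  ([[0;0;2];[0;1;1];[0;3;4];[1;2;4];[3;3;3]], 0, 1);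
  ([[0;0;2];[0;1;1];[0;3;4];[1;3;3];[2;2;4]], 0, 1);
  ([[0;0;2];[0;1;1];[0;3;4];[1;4;4];[2;2;3]], 0, 1);
  ([[0;0;2];[0;1;1];[1;2;2]], 0, 1);
  ([[0;0;2];[0;1;1];[1;2;3];[1;4;4];[3;3;4]], 0, 1);
  ([[0;0;2];[0;1;1];[1;2;3];[2;2;4];[3;4;4]], 0, 1);
  ([[0;0;2];[0;1;1];[1;2;3];[3;3;3]], 0, 1);
  ([[0;0;2];[0;1;1];[1;2;4];[1;3;3];[3;4;4]], 0, 1);
  ([[0;0;2];[0;1;1];[1;2;4];[2;2;3];[3;3;4]], 0, 1);
  ([[0;0;2];[0;1;1];[1;2;4];[4;4;4]], 0, 1);
  ([[0;0;2];[0;1;1];[1;3;3];[2;2;3]], 0, 1);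
  ([[0;0;2];[0;1;1];[1;3;3];[2;2;4];[3;4;4]], 0, 1);
  ([[0;0;2];[0;1;1];[1;3;3];[2;3;4];[4;4;4]], 0, 1);
  ([[0;0;2];[0;1;1];[1;3;4];[2;2;3];[4;4;4]], 0, 1);
  ([[0;0;2];[0;1;1];[1;3;4];[2;2;4];[3;3;3]], 0, 1);
  ([[0;0;2];[0;1;1];[1;4;4];[2;2;3];[3;3;4]], 0, 1);
  ([[0;0;2];[0;1;1];[1;4;4];[2;2;4]], 0, 1);
  ([[0;0;2];[0;1;1];[1;4;4];[2;3;4];[3;3;3]], 0, 1);
  ([[0;0;2];[0;1;2]], 0, 1);
  ([[0;0;2];[0;1;3];[0;4;4];[1;1;1];[2;3;4]], 0, 1);
  ([[0;0;2];[0;1;3];[0;4;4];[1;1;4];[2;2;3]], 0, 1);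
  ([[0;0;2];[0;1;3];[0;4;4];[1;1;4];[2;3;4]], 0, 1);
  ([[0;0;2];[0;1;3];[0;4;4];[1;2;2];[2;3;4]], 0, 1);
  ([[0;0;2];[0;1;3];[0;4;4];[1;2;2];[3;3;4]], 0, 1);
  ([[0;0;2];[0;1;3];[0;4;4];[1;2;4];[2;2;3]], 0, 1);
  ([[0;0;2];[0;1;3];[0;4;4];[1;2;4];[3;3;3]], 0, 1);
  ([[0;0;2];[0;1;3];[0;4;4];[1;2;4];[3;3;4]], 0, 1);
  ([[0;0;2];[0;1;3];[1;1;1];[2;2;3]], 0, 1);
  ([[0;0;2];[0;1;3];[1;1;1];[2;2;4];[3;4;4]], 0, 1);
  ([[0;0;2];[0;1;3];[1;1;4];[1;2;2];[2;3;4]], 0, 1);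
  ([[0;0;2];[0;1;3];[1;1;4];[1;2;2];[3;4;4]], 0, 1);
  ([[0;0;2];[0;1;3];[1;2;2];[2;3;4];[4;4;4]], 0, 1);
  ([[0;0;2];[0;1;3];[1;2;2];[3;3;3]], 0, 1);
  ([[0;0;2];[0;1;3];[1;2;4];[2;2;3];[3;3;4]], 0, 1);
  ([[0;0;2];[0;1;3];[1;2;4];[2;2;3];[4;4;4]], 0, 1);
  ([[0;0;2];[0;1;3];[1;2;4];[3;4;4]], 0, 1);
  ([[0;0;2];[0;1;3];[1;4;4];[2;2;3];[3;3;4]], 0, 1);
  ([[0;0;2];[0;1;3];[1;4;4];[2;2;4];[3;3;3]], 0, 1);
  ([[0;0;2];[0;1;3];[1;4;4];[2;3;4]], 0, 3);
  ([[0;0;2];[0;1;4];[0;3;3];[1;1;1];[2;3;4]], 0, 1);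
  ([[0;0;2];[0;1;4];[0;3;3];[1;1;3];[2;2;4]], 0, 1);
  ([[0;0;2];[0;1;4];[0;3;3];[1;1;3];[2;3;4]], 0, 1);
  ([[0;0;2];[0;1;4];[0;3;3];[1;2;2];[2;3;4]], 0, 1);
  ([[0;0;2];[0;1;4];[0;3;3];[1;2;2];[3;4;4]], 0, 1);
  ([[0;0;2];[0;1;4];[0;3;3];[1;2;3];[2;2;4]], 0, 1);
  ([[0;0;2];[0;1;4];[0;3;3];[1;2;3];[3;4;4]], 0, 1);
  ([[0;0;2];[0;1;4];[0;3;3];[1;2;3];[4;4;4]], 0, 1);
  ([[0;0;2];[0;1;4];[1;1;1];[2;2;3];[3;3;4]], 0, 1);
  ([[0;0;2];[0;1;4];[1;1;1];[2;2;4]], 0, 1);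
  ([[0;0;2];[0;1;4];[1;1;3];[1;2;2];[2;3;4]], 0, 1);
  ([[0;0;2];[0;1;4];[1;1;3];[1;2;2];[3;3;4]], 0, 1);
  ([[0;0;2];[0;1;4];[1;2;2];[2;3;4];[3;3;3]], 0, 1);
  ([[0;0;2];[0;1;4];[1;2;2];[4;4;4]], 0, 1);
  ([[0;0;2];[0;1;4];[1;2;3];[2;2;4];[3;3;3]], 0, 1);
  ([[0;0;2];[0;1;4];[1;2;3];[2;2;4];[3;4;4]], 0, 1);
  ([[0;0;2];[0;1;4];[1;2;3];[3;3;4]], 0, 1);
  ([[0;0;2];[0;1;4];[1;3;3];[2;2;3];[4;4;4]], 0, 1);
  ([[0;0;2];[0;1;4];[1;3;3];[2;2;4];[3;4;4]], 0, 1);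
  ([[0;0;2];[0;1;4];[1;3;3];[2;3;4]], 0, 3);
  ([[0;0;2];[0;2;2]], 0, 2);
  ([[0;0;2];[0;2;3]], 0, 3);
  ([[0;0;2];[0;2;4]], 0, 4);
  ([[0;0;2];[0;3;3];[1;1;1];[1;2;3]], 0, 1);
  ([[0;0;2];[0;3;3];[1;1;1];[1;2;4];[3;4;4]], 0, 1);
  ([[0;0;2];[0;3;3];[1;1;1];[1;3;4];[2;2;4]], 0, 1);
  ([[0;0;2];[0;3;3];[1;1;3];[1;2;2]], 0, 1);
  ([[0;0;2];[0;3;3];[1;1;3];[1;2;4];[4;4;4]], 0, 1);
  ([[0;0;2];[0;3;3];[1;1;3];[1;4;4];[2;2;4]], 0, 1);
  ([[0;0;2];[0;3;3];[1;1;3];[1;4;4];[2;3;4]], 0, 1);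
  ([[0;0;2];[0;3;3];[1;1;4];[1;2;2];[2;3;4]], 0, 1);
  ([[0;0;2];[0;3;3];[1;1;4];[1;2;2];[3;4;4]], 0, 1);
  ([[0;0;2];[0;3;3];[1;1;4];[1;2;3];[3;4;4]], 0, 1);
  ([[0;0;2];[0;3;3];[1;2;2];[1;3;4];[4;4;4]], 0, 1);
  ([[0;0;2];[0;3;3];[1;2;3];[1;4;4];[2;2;4]], 0, 1);
  ([[0;0;2];[0;3;3];[2;2;3]], 0, 2);
  ([[0;0;2];[0;3;3];[2;2;4];[3;4;4]], 0, 2);
  ([[0;0;2];[0;3;3];[2;3;4];[4;4;4]], 0, 2);
  ([[0;0;2];[0;3;4];[1;1;1];[1;2;3];[2;2;4]], 0, 1);
  ([[0;0;2];[0;3;4];[1;1;1];[1;2;4];[2;2;3]], 0, 1);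
  ([[0;0;2];[0;3;4];[1;1;3];[1;2;2];[4;4;4]], 0, 1);
  ([[0;0;2];[0;3;4];[1;1;3];[1;2;4]], 0, 1);
  ([[0;0;2];[0;3;4];[1;1;3];[1;4;4];[2;2;4]], 0, 1);
  ([[0;0;2];[0;3;4];[1;1;4];[1;2;2];[3;3;3]], 0, 1);
  ([[0;0;2];[0;3;4];[1;1;4];[1;2;3]], 0, 1);
  ([[0;0;2];[0;3;4];[1;1;4];[1;3;3];[2;2;3]], 0, 1);
  ([[0;0;2];[0;3;4];[1;2;3];[1;4;4];[2;2;4]], 0, 1);
  ([[0;0;2];[0;3;4];[1;2;4];[1;3;3];[2;2;3]], 0, 1);
  ([[0;0;2];[0;3;4];[2;2;3];[4;4;4]], 0, 2);
  ([[0;0;2];[0;3;4];[2;2;4];[3;3;3]], 0, 2);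
  ([[0;0;2];[0;4;4];[1;1;1];[1;2;3];[3;3;4]], 0, 1);
  ([[0;0;2];[0;4;4];[1;1;1];[1;2;4]], 0, 1);
  ([[0;0;2];[0;4;4];[1;1;1];[1;3;4];[2;2;3]], 0, 1);
  ([[0;0;2];[0;4;4];[1;1;3];[1;2;2];[2;3;4]], 0, 1);
  ([[0;0;2];[0;4;4];[1;1;3];[1;2;2];[3;3;4]], 0, 1);
  ([[0;0;2];[0;4;4];[1;1;3];[1;2;4];[3;3;4]], 0, 1);
  ([[0;0;2];[0;4;4];[1;1;4];[1;2;2]], 0, 1);
  ([[0;0;2];[0;4;4];[1;1;4];[1;2;3];[3;3;3]], 0, 1);
  ([[0;0;2];[0;4;4];[1;1;4];[1;3;3];[2;2;3]], 0, 1);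
  ([[0;0;2];[0;4;4];[1;1;4];[1;3;3];[2;3;4]], 0, 1);
  ([[0;0;2];[0;4;4];[1;2;2];[1;3;4];[3;3;3]], 0, 1);
  ([[0;0;2];[0;4;4];[1;2;4];[1;3;3];[2;2;3]], 0, 1);
  ([[0;0;2];[0;4;4];[2;2;3];[3;3;4]], 0, 2);
  ([[0;0;2];[0;4;4];[2;2;4]], 0, 2);
  ([[0;0;2];[0;4;4];[2;3;4];[3;3;3]], 0, 2);
  ([[0;0;2];[1;1;2]], 0, 1);
  ([[0;0;2];[2;2;2]], 0, 2);
  ([[0;0;2];[2;3;3]], 0, 3);
  ([[0;0;2];[2;4;4]], 0, 4);
  ([[0;0;3];[0;0;4]], 3, 4);
  ([[0;0;3];[0;1;1];[0;2;4];[1;2;2];[1;3;4]], 0, 1);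
  ([[0;0;3];[0;1;1];[0;2;4];[1;2;2];[3;3;4]], 0, 1);
  ([[0;0;3];[0;1;1];[0;2;4];[1;2;3];[1;4;4]], 0, 1);
  ([[0;0;3];[0;1;1];[0;2;4];[1;2;3];[3;3;4]], 0, 1);
  ([[0;0;3];[0;1;1];[0;2;4];[1;2;3];[4;4;4]], 0, 1);
  ([[0;0;3];[0;1;1];[0;2;4];[1;3;4];[2;2;2]], 0, 1);
  ([[0;0;3];[0;1;1];[0;2;4];[1;3;4];[2;3;3]], 0, 1);
  ([[0;0;3];[0;1;1];[0;2;4];[1;4;4];[2;3;3]], 0, 1);
  ([[0;0;3];[0;1;1];[1;2;2];[1;3;4];[2;4;4]], 0, 1);
  ([[0;0;3];[0;1;1];[1;2;2];[2;3;3]], 0, 1);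
  ([[0;0;3];[0;1;1];[1;2;2];[2;3;4];[4;4;4]], 0, 1);
  ([[0;0;3];[0;1;1];[1;2;2];[2;4;4];[3;3;4]], 0, 1);
  ([[0;0;3];[0;1;1];[1;2;3];[1;4;4];[2;2;4]], 0, 1);
  ([[0;0;3];[0;1;1];[1;2;3];[2;2;2]], 0, 1);
  ([[0;0;3];[0;1;1];[1;2;3];[2;4;4];[3;3;4]], 0, 1);
  ([[0;0;3];[0;1;1];[1;2;4];[2;2;2];[3;3;4]], 0, 1);
  ([[0;0;3];[0;1;1];[1;2;4];[2;3;3];[4;4;4]], 0, 1);
  ([[0;0;3];[0;1;1];[1;3;3]], 0, 1);
  ([[0;0;3];[0;1;1];[1;3;4];[2;2;4];[2;3;3]], 0, 1);
  ([[0;0;3];[0;1;1];[1;3;4];[4;4;4]], 0, 1);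
  ([[0;0;3];[0;1;1];[1;4;4];[2;2;2];[2;3;4]], 0, 1);
  ([[0;0;3];[0;1;1];[1;4;4];[2;2;4];[2;3;3]], 0, 1);
  ([[0;0;3];[0;1;1];[1;4;4];[3;3;4]], 0, 1);
  ([[0;0;3];[0;1;2];[0;4;4];[1;1;1];[2;3;4]], 0, 1);
  ([[0;0;3];[0;1;2];[0;4;4];[1;1;4];[2;3;3]], 0, 1);
  ([[0;0;3];[0;1;2];[0;4;4];[1;1;4];[2;3;4]], 0, 1);
  ([[0;0;3];[0;1;2];[0;4;4];[1;3;3];[2;2;4]], 0, 1);
  ([[0;0;3];[0;1;2];[0;4;4];[1;3;3];[2;3;4]], 0, 1);
  ([[0;0;3];[0;1;2];[0;4;4];[1;3;4];[2;2;2]], 0, 1);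
  ([[0;0;3];[0;1;2];[0;4;4];[1;3;4];[2;2;4]], 0, 1);
  ([[0;0;3];[0;1;2];[0;4;4];[1;3;4];[2;3;3]], 0, 1);
  ([[0;0;3];[0;1;2];[1;1;1];[2;3;3]], 0, 1);
  ([[0;0;3];[0;1;2];[1;1;1];[2;4;4];[3;3;4]], 0, 1);
  ([[0;0;3];[0;1;2];[1;1;4];[1;3;3];[2;3;4]], 0, 1);
  ([[0;0;3];[0;1;2];[1;1;4];[1;3;3];[2;4;4]], 0, 1);
  ([[0;0;3];[0;1;2];[1;3;3];[2;2;2]], 0, 1);
  ([[0;0;3];[0;1;2];[1;3;3];[2;3;4];[4;4;4]], 0, 1);
  ([[0;0;3];[0;1;2];[1;3;4];[2;2;4];[2;3;3]], 0, 1);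
  ([[0;0;3];[0;1;2];[1;3;4];[2;3;3];[4;4;4]], 0, 1);
  ([[0;0;3];[0;1;2];[1;3;4];[2;4;4]], 0, 1);
  ([[0;0;3];[0;1;2];[1;4;4];[2;2;2];[3;3;4]], 0, 1);
  ([[0;0;3];[0;1;2];[1;4;4];[2;2;4];[2;3;3]], 0, 1);
  ([[0;0;3];[0;1;2];[1;4;4];[2;3;4]], 0, 2);
  ([[0;0;3];[0;1;3]], 0, 1);
  ([[0;0;3];[0;1;4];[0;2;2];[1;1;1];[2;3;4]], 0, 1);
  ([[0;0;3];[0;1;4];[0;2;2];[1;1;2];[2;3;4]], 0, 1);
  ([[0;0;3];[0;1;4];[0;2;2];[1;1;2];[3;3;4]], 0, 1);
  ([[0;0;3];[0;1;4];[0;2;2];[1;2;3];[2;4;4]], 0, 1);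
  ([[0;0;3];[0;1;4];[0;2;2];[1;2;3];[3;3;4]], 0, 1);
  ([[0;0;3];[0;1;4];[0;2;2];[1;2;3];[4;4;4]], 0, 1);
  ([[0;0;3];[0;1;4];[0;2;2];[1;3;3];[2;3;4]], 0, 1);
  ([[0;0;3];[0;1;4];[0;2;2];[1;3;3];[2;4;4]], 0, 1);
  ([[0;0;3];[0;1;4];[1;1;1];[2;2;4];[2;3;3]], 0, 1);
  ([[0;0;3];[0;1;4];[1;1;1];[3;3;4]], 0, 1);
  ([[0;0;3];[0;1;4];[1;1;2];[1;3;3];[2;2;4]], 0, 1);
  ([[0;0;3];[0;1;4];[1;1;2];[1;3;3];[2;3;4]], 0, 1);
  ([[0;0;3];[0;1;4];[1;2;2];[2;3;3];[4;4;4]], 0, 1);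
  ([[0;0;3];[0;1;4];[1;2;2];[2;3;4]], 0, 2);
  ([[0;0;3];[0;1;4];[1;2;2];[2;4;4];[3;3;4]], 0, 1);
  ([[0;0;3];[0;1;4];[1;2;3];[2;2;2];[3;3;4]], 0, 1);
  ([[0;0;3];[0;1;4];[1;2;3];[2;2;4]], 0, 1);
  ([[0;0;3];[0;1;4];[1;2;3];[2;4;4];[3;3;4]], 0, 1);
  ([[0;0;3];[0;1;4];[1;3;3];[2;2;2];[2;3;4]], 0, 1);
  ([[0;0;3];[0;1;4];[1;3;3];[4;4;4]], 0, 1);
  ([[0;0;3];[0;2;2];[1;1;1];[1;2;3]], 0, 1);
  ([[0;0;3];[0;2;2];[1;1;1];[1;2;4];[3;3;4]], 0, 1);
  ([[0;0;3];[0;2;2];[1;1;1];[1;3;4];[2;4;4]], 0, 1);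
  ([[0;0;3];[0;2;2];[1;1;2];[1;3;3]], 0, 1);
  ([[0;0;3];[0;2;2];[1;1;2];[1;3;4];[4;4;4]], 0, 1);
  ([[0;0;3];[0;2;2];[1;1;2];[1;4;4];[2;3;4]], 0, 1);
  ([[0;0;3];[0;2;2];[1;1;2];[1;4;4];[3;3;4]], 0, 1);
  ([[0;0;3];[0;2;2];[1;1;4];[1;2;3];[2;4;4]], 0, 1);
  ([[0;0;3];[0;2;2];[1;1;4];[1;3;3];[2;3;4]], 0, 1);
  ([[0;0;3];[0;2;2];[1;1;4];[1;3;3];[2;4;4]], 0, 1);
  ([[0;0;3];[0;2;2];[1;2;3];[1;4;4];[3;3;4]], 0, 1);
  ([[0;0;3];[0;2;2];[1;2;4];[1;3;3];[4;4;4]], 0, 1);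
  ([[0;0;3];[0;2;2];[2;3;3]], 0, 2);
  ([[0;0;3];[0;2;2];[2;3;4];[4;4;4]], 0, 2);
  ([[0;0;3];[0;2;2];[2;4;4];[3;3;4]], 0, 2);
  ([[0;0;3];[0;2;3]], 0, 2);
  ([[0;0;3];[0;2;4];[1;1;1];[1;2;3];[3;3;4]], 0, 1);
  ([[0;0;3];[0;2;4];[1;1;1];[1;3;4];[2;3;3]], 0, 1);
  ([[0;0;3];[0;2;4];[1;1;2];[1;3;3];[4;4;4]], 0, 1);
  ([[0;0;3];[0;2;4];[1;1;2];[1;3;4]], 0, 1);
  ([[0;0;3];[0;2;4];[1;1;2];[1;4;4];[3;3;4]], 0, 1);
  ([[0;0;3];[0;2;4];[1;1;4];[1;2;2];[2;3;3]], 0, 1);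
  ([[0;0;3];[0;2;4];[1;1;4];[1;2;3]], 0, 1);
  ([[0;0;3];[0;2;4];[1;1;4];[1;3;3];[2;2;2]], 0, 1);
  ([[0;0;3];[0;2;4];[1;2;2];[1;3;4];[2;3;3]], 0, 1);
  ([[0;0;3];[0;2;4];[1;2;3];[1;4;4];[3;3;4]], 0, 1);
  ([[0;0;3];[0;2;4];[2;2;2];[3;3;4]], 0, 2);
  ([[0;0;3];[0;2;4];[2;3;3];[4;4;4]], 0, 2);
  ([[0;0;3];[0;3;3]], 0, 3);
  ([[0;0;3];[0;3;4]], 0, 4);
  ([[0;0;3];[0;4;4];[1;1;1];[1;2;3];[2;2;4]], 0, 1);
  ([[0;0;3];[0;4;4];[1;1;1];[1;2;4];[2;3;3]], 0, 1);
  ([[0;0;3];[0;4;4];[1;1;1];[1;3;4]], 0, 1);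
  ([[0;0;3];[0;4;4];[1;1;2];[1;3;3];[2;2;4]], 0, 1);
  ([[0;0;3];[0;4;4];[1;1;2];[1;3;3];[2;3;4]], 0, 1);
  ([[0;0;3];[0;4;4];[1;1;2];[1;3;4];[2;2;4]], 0, 1);
  ([[0;0;3];[0;4;4];[1;1;4];[1;2;2];[2;3;3]], 0, 1);
  ([[0;0;3];[0;4;4];[1;1;4];[1;2;2];[2;3;4]], 0, 1);
  ([[0;0;3];[0;4;4];[1;1;4];[1;2;3];[2;2;2]], 0, 1);
  ([[0;0;3];[0;4;4];[1;1;4];[1;3;3]], 0, 1);
  ([[0;0;3];[0;4;4];[1;2;2];[1;3;4];[2;3;3]], 0, 1);
  ([[0;0;3];[0;4;4];[1;2;4];[1;3;3];[2;2;2]], 0, 1);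
  ([[0;0;3];[0;4;4];[2;2;2];[2;3;4]], 0, 2);
  ([[0;0;3];[0;4;4];[2;2;4];[2;3;3]], 0, 2);
  ([[0;0;3];[0;4;4];[3;3;4]], 0, 3);
  ([[0;0;3];[1;1;3]], 0, 1);
  ([[0;0;3];[2;2;3]], 0, 2);
  ([[0;0;3];[3;3;3]], 0, 3);
  ([[0;0;3];[3;4;4]], 0, 4);
  ([[0;0;4];[0;1;1];[0;2;3];[1;2;2];[1;3;4]], 0, 1);
  ([[0;0;4];[0;1;1];[0;2;3];[1;2;2];[3;4;4]], 0, 1);
  ([[0;0;4];[0;1;1];[0;2;3];[1;2;4];[1;3;3]], 0, 1);
  ([[0;0;4];[0;1;1];[0;2;3];[1;2;4];[3;3;3]], 0, 1);
  ([[0;0;4];[0;1;1];[0;2;3];[1;2;4];[3;4;4]], 0, 1);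
  ([[0;0;4];[0;1;1];[0;2;3];[1;3;3];[2;4;4]], 0, 1);
  ([[0;0;4];[0;1;1];[0;2;3];[1;3;4];[2;2;2]], 0, 1);
  ([[0;0;4];[0;1;1];[0;2;3];[1;3;4];[2;4;4]], 0, 1);
  ([[0;0;4];[0;1;1];[1;2;2];[1;3;4];[2;3;3]], 0, 1);
  ([[0;0;4];[0;1;1];[1;2;2];[2;3;3];[3;4;4]], 0, 1);
  ([[0;0;4];[0;1;1];[1;2;2];[2;3;4];[3;3;3]], 0, 1);
  ([[0;0;4];[0;1;1];[1;2;2];[2;4;4]], 0, 1);
  ([[0;0;4];[0;1;1];[1;2;3];[2;2;2];[3;4;4]], 0, 1);
  ([[0;0;4];[0;1;1];[1;2;3];[2;4;4];[3;3;3]], 0, 1);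
  ([[0;0;4];[0;1;1];[1;2;4];[1;3;3];[2;2;3]], 0, 1);
  ([[0;0;4];[0;1;1];[1;2;4];[2;2;2]], 0, 1);
  ([[0;0;4];[0;1;1];[1;2;4];[2;3;3];[3;4;4]], 0, 1);
  ([[0;0;4];[0;1;1];[1;3;3];[2;2;2];[2;3;4]], 0, 1);
  ([[0;0;4];[0;1;1];[1;3;3];[2;2;3];[2;4;4]], 0, 1);
  ([[0;0;4];[0;1;1];[1;3;3];[3;4;4]], 0, 1);
  ([[0;0;4];[0;1;1];[1;3;4];[2;2;3];[2;4;4]], 0, 1);
  ([[0;0;4];[0;1;1];[1;3;4];[3;3;3]], 0, 1);
  ([[0;0;4];[0;1;1];[1;4;4]], 0, 1);
  ([[0;0;4];[0;1;2];[0;3;3];[1;1;1];[2;3;4]], 0, 1);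
  ([[0;0;4];[0;1;2];[0;3;3];[1;1;3];[2;3;4]], 0, 1);
  ([[0;0;4];[0;1;2];[0;3;3];[1;1;3];[2;4;4]], 0, 1);
  ([[0;0;4];[0;1;2];[0;3;3];[1;3;4];[2;2;2]], 0, 1);
  ([[0;0;4];[0;1;2];[0;3;3];[1;3;4];[2;2;3]], 0, 1);
  ([[0;0;4];[0;1;2];[0;3;3];[1;3;4];[2;4;4]], 0, 1);
  ([[0;0;4];[0;1;2];[0;3;3];[1;4;4];[2;2;3]], 0, 1);
  ([[0;0;4];[0;1;2];[0;3;3];[1;4;4];[2;3;4]], 0, 1);
  ([[0;0;4];[0;1;2];[1;1;1];[2;3;3];[3;4;4]], 0, 1);
  ([[0;0;4];[0;1;2];[1;1;1];[2;4;4]], 0, 1);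
  ([[0;0;4];[0;1;2];[1;1;3];[1;4;4];[2;3;3]], 0, 1);
  ([[0;0;4];[0;1;2];[1;1;3];[1;4;4];[2;3;4]], 0, 1);
  ([[0;0;4];[0;1;2];[1;3;3];[2;2;2];[3;4;4]], 0, 1);
  ([[0;0;4];[0;1;2];[1;3;3];[2;2;3];[2;4;4]], 0, 1);
  ([[0;0;4];[0;1;2];[1;3;3];[2;3;4]], 0, 2);
  ([[0;0;4];[0;1;2];[1;3;4];[2;2;3];[2;4;4]], 0, 1);
  ([[0;0;4];[0;1;2];[1;3;4];[2;3;3]], 0, 1);
  ([[0;0;4];[0;1;2];[1;3;4];[2;4;4];[3;3;3]], 0, 1);
  ([[0;0;4];[0;1;2];[1;4;4];[2;2;2]], 0, 1);
  ([[0;0;4];[0;1;2];[1;4;4];[2;3;4];[3;3;3]], 0, 1);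
  ([[0;0;4];[0;1;3];[0;2;2];[1;1;1];[2;3;4]], 0, 1);
  ([[0;0;4];[0;1;3];[0;2;2];[1;1;2];[2;3;4]], 0, 1);
  ([[0;0;4];[0;1;3];[0;2;2];[1;1;2];[3;4;4]], 0, 1);
  ([[0;0;4];[0;1;3];[0;2;2];[1;2;4];[2;3;3]], 0, 1);
  ([[0;0;4];[0;1;3];[0;2;2];[1;2;4];[3;3;3]], 0, 1);
  ([[0;0;4];[0;1;3];[0;2;2];[1;2;4];[3;4;4]], 0, 1);
  ([[0;0;4];[0;1;3];[0;2;2];[1;4;4];[2;3;3]], 0, 1);
  ([[0;0;4];[0;1;3];[0;2;2];[1;4;4];[2;3;4]], 0, 1);
  ([[0;0;4];[0;1;3];[1;1;1];[2;2;3];[2;4;4]], 0, 1);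
  ([[0;0;4];[0;1;3];[1;1;1];[3;4;4]], 0, 1);
  ([[0;0;4];[0;1;3];[1;1;2];[1;4;4];[2;2;3]], 0, 1);
  ([[0;0;4];[0;1;3];[1;1;2];[1;4;4];[2;3;4]], 0, 1);
  ([[0;0;4];[0;1;3];[1;2;2];[2;3;3];[3;4;4]], 0, 1);
  ([[0;0;4];[0;1;3];[1;2;2];[2;3;4]], 0, 2);
  ([[0;0;4];[0;1;3];[1;2;2];[2;4;4];[3;3;3]], 0, 1);
  ([[0;0;4];[0;1;3];[1;2;4];[2;2;2];[3;4;4]], 0, 1);
  ([[0;0;4];[0;1;3];[1;2;4];[2;2;3]], 0, 1);
  ([[0;0;4];[0;1;3];[1;2;4];[2;3;3];[3;4;4]], 0, 1);
  ([[0;0;4];[0;1;3];[1;4;4];[2;2;2];[2;3;4]], 0, 1);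
  ([[0;0;4];[0;1;3];[1;4;4];[3;3;3]], 0, 1);
  ([[0;0;4];[0;1;4]], 0, 1);
  ([[0;0;4];[0;2;2];[1;1;1];[1;2;3];[3;4;4]], 0, 1);
  ([[0;0;4];[0;2;2];[1;1;1];[1;2;4]], 0, 1);
  ([[0;0;4];[0;2;2];[1;1;1];[1;3;4];[2;3;3]], 0, 1);
  ([[0;0;4];[0;2;2];[1;1;2];[1;3;3];[2;3;4]], 0, 1);
  ([[0;0;4];[0;2;2];[1;1;2];[1;3;3];[3;4;4]], 0, 1);
  ([[0;0;4];[0;2;2];[1;1;2];[1;3;4];[3;3;3]], 0, 1);
  ([[0;0;4];[0;2;2];[1;1;2];[1;4;4]], 0, 1);
  ([[0;0;4];[0;2;2];[1;1;3];[1;2;4];[2;3;3]], 0, 1);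
  ([[0;0;4];[0;2;2];[1;1;3];[1;4;4];[2;3;3]], 0, 1);
  ([[0;0;4];[0;2;2];[1;1;3];[1;4;4];[2;3;4]], 0, 1);
  ([[0;0;4];[0;2;2];[1;2;3];[1;4;4];[3;3;3]], 0, 1);
  ([[0;0;4];[0;2;2];[1;2;4];[1;3;3];[3;4;4]], 0, 1);
  ([[0;0;4];[0;2;2];[2;3;3];[3;4;4]], 0, 2);
  ([[0;0;4];[0;2;2];[2;3;4];[3;3;3]], 0, 2);
  ([[0;0;4];[0;2;2];[2;4;4]], 0, 2);
  ([[0;0;4];[0;2;3];[1;1;1];[1;2;4];[3;4;4]], 0, 1);
  ([[0;0;4];[0;2;3];[1;1;1];[1;3;4];[2;4;4]], 0, 1);
  ([[0;0;4];[0;2;3];[1;1;2];[1;3;3];[3;4;4]], 0, 1);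
  ([[0;0;4];[0;2;3];[1;1;2];[1;3;4]], 0, 1);
  ([[0;0;4];[0;2;3];[1;1;2];[1;4;4];[3;3;3]], 0, 1);
  ([[0;0;4];[0;2;3];[1;1;3];[1;2;2];[2;4;4]], 0, 1);
  ([[0;0;4];[0;2;3];[1;1;3];[1;2;4]], 0, 1);
  ([[0;0;4];[0;2;3];[1;1;3];[1;4;4];[2;2;2]], 0, 1);
  ([[0;0;4];[0;2;3];[1;2;2];[1;3;4];[2;4;4]], 0, 1);
  ([[0;0;4];[0;2;3];[1;2;4];[1;3;3];[3;4;4]], 0, 1);
  ([[0;0;4];[0;2;3];[2;2;2];[3;4;4]], 0, 2);
  ([[0;0;4];[0;2;3];[2;4;4];[3;3;3]], 0, 2);
  ([[0;0;4];[0;2;4]], 0, 2);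
  ([[0;0;4];[0;3;3];[1;1;1];[1;2;3];[2;4;4]], 0, 1);
  ([[0;0;4];[0;3;3];[1;1;1];[1;2;4];[2;2;3]], 0, 1);
  ([[0;0;4];[0;3;3];[1;1;1];[1;3;4]], 0, 1);
  ([[0;0;4];[0;3;3];[1;1;2];[1;3;4];[2;2;3]], 0, 1);
  ([[0;0;4];[0;3;3];[1;1;2];[1;4;4];[2;2;3]], 0, 1);
  ([[0;0;4];[0;3;3];[1;1;2];[1;4;4];[2;3;4]], 0, 1);
  ([[0;0;4];[0;3;3];[1;1;3];[1;2;2];[2;3;4]], 0, 1);
  ([[0;0;4];[0;3;3];[1;1;3];[1;2;2];[2;4;4]], 0, 1);
  ([[0;0;4];[0;3;3];[1;1;3];[1;2;4];[2;2;2]], 0, 1);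
  ([[0;0;4];[0;3;3];[1;1;3];[1;4;4]], 0, 1);
  ([[0;0;4];[0;3;3];[1;2;2];[1;3;4];[2;4;4]], 0, 1);
  ([[0;0;4];[0;3;3];[1;2;3];[1;4;4];[2;2;2]], 0, 1);
  ([[0;0;4];[0;3;3];[2;2;2];[2;3;4]], 0, 2);
  ([[0;0;4];[0;3;3];[2;2;3];[2;4;4]], 0, 2);
  ([[0;0;4];[0;3;3];[3;4;4]], 0, 3);
  ([[0;0;4];[0;3;4]], 0, 3);
  ([[0;0;4];[0;4;4]], 0, 4);
  ([[0;0;4];[1;1;4]], 0, 1);
  ([[0;0;4];[2;2;4]], 0, 2);
  ([[0;0;4];[3;3;4]], 0, 3);
  ([[0;0;4];[4;4;4]], 0, 4);
  ([[0;1;1];[0;1;2]], 1, 2);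
  ([[0;1;1];[0;1;3]], 1, 3);
  ([[0;1;1];[0;1;4]], 1, 4);
  ([[0;1;1];[0;2;2]], 1, 2);
  ([[0;1;1];[0;2;3];[1;2;2];[1;3;4];[2;4;4]], 0, 1);
  ([[0;1;1];[0;2;3];[1;2;2];[1;3;4];[4;4;4]], 0, 1);
  ([[0;1;1];[0;2;3];[1;2;2];[2;4;4];[3;3;4]], 0, 1);
  ([[0;1;1];[0;2;3];[1;2;2];[3;3;3]], 0, 1);
  ([[0;1;1];[0;2;3];[1;2;4];[1;3;3];[3;4;4]], 0, 1);
  ([[0;1;1];[0;2;3];[1;2;4];[1;3;3];[4;4;4]], 0, 1);
  ([[0;1;1];[0;2;3];[1;2;4];[3;3;4]], 0, 4);
  ([[0;1;1];[0;2;3];[1;3;3];[2;2;2]], 0, 1);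
  ([[0;1;1];[0;2;3];[1;3;3];[2;2;4];[3;4;4]], 0, 1);
  ([[0;1;1];[0;2;3];[1;3;4];[2;2;4]], 0, 4);
  ([[0;1;1];[0;2;3];[1;4;4];[2;2;2];[3;3;4]], 0, 1);
  ([[0;1;1];[0;2;3];[1;4;4];[2;2;4];[3;3;3]], 0, 1);
  ([[0;1;1];[0;2;4];[1;2;2];[1;3;4];[2;3;3]], 0, 1);
  ([[0;1;1];[0;2;4];[1;2;2];[1;3;4];[3;3;3]], 0, 1);
  ([[0;1;1];[0;2;4];[1;2;2];[2;3;3];[3;4;4]], 0, 1);
  ([[0;1;1];[0;2;4];[1;2;2];[4;4;4]], 0, 1);
  ([[0;1;1];[0;2;4];[1;2;3];[1;4;4];[3;3;3]], 0, 1);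
  ([[0;1;1];[0;2;4];[1;2;3];[1;4;4];[3;3;4]], 0, 1);
  ([[0;1;1];[0;2;4];[1;2;3];[3;4;4]], 0, 3);
  ([[0;1;1];[0;2;4];[1;3;3];[2;2;2];[3;4;4]], 0, 1);
  ([[0;1;1];[0;2;4];[1;3;3];[2;2;3];[4;4;4]], 0, 1);
  ([[0;1;1];[0;2;4];[1;3;4];[2;2;3]], 0, 3);
  ([[0;1;1];[0;2;4];[1;4;4];[2;2;2]], 0, 1);
  ([[0;1;1];[0;2;4];[1;4;4];[2;2;3];[3;3;4]], 0, 1);
  ([[0;1;1];[0;3;3]], 1, 3);
  ([[0;1;1];[0;3;4];[1;2;2];[2;3;3];[4;4;4]], 0, 1);
  ([[0;1;1];[0;3;4];[1;2;2];[2;4;4];[3;3;3]], 0, 1);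
  ([[0;1;1];[0;3;4];[1;2;3];[1;4;4];[2;2;2]], 0, 1);
  ([[0;1;1];[0;3;4];[1;2;3];[1;4;4];[2;2;4]], 0, 1);
  ([[0;1;1];[0;3;4];[1;2;3];[2;4;4]], 0, 2);
  ([[0;1;1];[0;3;4];[1;2;4];[1;3;3];[2;2;2]], 0, 1);
  ([[0;1;1];[0;3;4];[1;2;4];[1;3;3];[2;2;3]], 0, 1);
  ([[0;1;1];[0;3;4];[1;2;4];[2;3;3]], 0, 2);
  ([[0;1;1];[0;3;4];[1;3;3];[2;2;3];[2;4;4]], 0, 1);
  ([[0;1;1];[0;3;4];[1;3;3];[4;4;4]], 0, 1);
  ([[0;1;1];[0;3;4];[1;4;4];[2;2;4];[2;3;3]], 0, 1);
  ([[0;1;1];[0;3;4];[1;4;4];[3;3;3]], 0, 1);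
  ([[0;1;1];[0;4;4]], 1, 4);
  ([[0;1;1];[1;1;1]], 0, 1);
  ([[0;1;1];[1;1;2]], 0, 2);
  ([[0;1;1];[1;1;3]], 0, 3);
  ([[0;1;1];[1;1;4]], 0, 4);
  ([[0;1;2];[0;1;3]], 2, 3);
  ([[0;1;2];[0;1;4]], 2, 4);
  ([[0;1;2];[0;2;2]], 1, 2);
  ([[0;1;2];[0;2;3]], 1, 3);
  ([[0;1;2];[0;2;4]], 1, 4);
  ([[0;1;2];[0;3;3];[1;1;1];[2;2;3]], 0, 1);
  ([[0;1;2];[0;3;3];[1;1;1];[2;2;4];[3;4;4]], 0, 1);
  ([[0;1;2];[0;3;3];[1;1;3];[1;4;4];[2;2;4]], 0, 1);
  ([[0;1;2];[0;3;3];[1;1;3];[1;4;4];[2;3;4]], 0, 1);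
  ([[0;1;2];[0;3;3];[1;1;3];[2;2;2]], 0, 1);
  ([[0;1;2];[0;3;3];[1;1;3];[2;3;4];[4;4;4]], 0, 1);
  ([[0;1;2];[0;3;3];[1;1;4];[2;2;2];[3;4;4]], 0, 1);
  ([[0;1;2];[0;3;3];[1;1;4];[2;2;3];[2;4;4]], 0, 1);
  ([[0;1;2];[0;3;3];[1;1;4];[2;3;4]], 0, 4);
  ([[0;1;2];[0;3;3];[1;3;4];[2;2;3];[2;4;4]], 0, 1);
  ([[0;1;2];[0;3;3];[1;3;4];[2;2;3];[4;4;4]], 0, 1);
  ([[0;1;2];[0;3;3];[1;3;4];[2;2;4]], 0, 4);
  ([[0;1;2];[0;3;4];[1;1;1];[2;2;3];[2;4;4]], 0, 1);
  ([[0;1;2];[0;3;4];[1;1;1];[2;2;4];[2;3;3]], 0, 1);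
  ([[0;1;2];[0;3;4];[1;1;3];[1;4;4];[2;2;2]], 0, 1);
  ([[0;1;2];[0;3;4];[1;1;3];[1;4;4];[2;2;4]], 0, 1);
  ([[0;1;2];[0;3;4];[1;1;3];[1;4;4];[2;3;3]], 0, 1);
  ([[0;1;2];[0;3;4];[1;1;3];[2;2;4];[2;3;3]], 0, 1);
  ([[0;1;2];[0;3;4];[1;1;3];[2;3;3];[4;4;4]], 0, 1);
  ([[0;1;2];[0;3;4];[1;1;3];[2;4;4]], 0, 1);
  ([[0;1;2];[0;3;4];[1;1;4];[1;3;3];[2;2;2]], 0, 1);
  ([[0;1;2];[0;3;4];[1;1;4];[1;3;3];[2;2;3]], 0, 1);
  ([[0;1;2];[0;3;4];[1;1;4];[1;3;3];[2;4;4]], 0, 1);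
  ([[0;1;2];[0;3;4];[1;1;4];[2;2;3];[2;4;4]], 0, 1);
  ([[0;1;2];[0;3;4];[1;1;4];[2;3;3]], 0, 1);
  ([[0;1;2];[0;3;4];[1;1;4];[2;4;4];[3;3;3]], 0, 1);
  ([[0;1;2];[0;3;4];[1;3;3];[2;2;3];[2;4;4]], 0, 1);
  ([[0;1;2];[0;3;4];[1;3;3];[2;2;3];[4;4;4]], 0, 1);
  ([[0;1;2];[0;3;4];[1;3;3];[2;2;4]], 0, 2);
  ([[0;1;2];[0;3;4];[1;4;4];[2;2;3]], 0, 2);
  ([[0;1;2];[0;3;4];[1;4;4];[2;2;4];[2;3;3]], 0, 1);
  ([[0;1;2];[0;3;4];[1;4;4];[2;2;4];[3;3;3]], 0, 1);
  ([[0;1;2];[0;4;4];[1;1;1];[2;2;3];[3;3;4]], 0, 1);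
  ([[0;1;2];[0;4;4];[1;1;1];[2;2;4]], 0, 1);
  ([[0;1;2];[0;4;4];[1;1;3];[2;2;2];[3;3;4]], 0, 1);
  ([[0;1;2];[0;4;4];[1;1;3];[2;2;4];[2;3;3]], 0, 1);
  ([[0;1;2];[0;4;4];[1;1;3];[2;3;4]], 0, 3);
  ([[0;1;2];[0;4;4];[1;1;4];[1;3;3];[2;2;3]], 0, 1);
  ([[0;1;2];[0;4;4];[1;1;4];[1;3;3];[2;3;4]], 0, 1);
  ([[0;1;2];[0;4;4];[1;1;4];[2;2;2]], 0, 1);
  ([[0;1;2];[0;4;4];[1;1;4];[2;3;4];[3;3;3]], 0, 1);
  ([[0;1;2];[0;4;4];[1;3;4];[2;2;3]], 0, 3);
  ([[0;1;2];[0;4;4];[1;3;4];[2;2;4];[2;3;3]], 0, 1);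
  ([[0;1;2];[0;4;4];[1;3;4];[2;2;4];[3;3;3]], 0, 1);
  ([[0;1;2];[1;1;2]], 0, 1);
  ([[0;1;2];[1;2;2]], 0, 2);
  ([[0;1;2];[1;2;3]], 0, 3);
  ([[0;1;2];[1;2;4]], 0, 4);
  ([[0;1;3];[0;1;4]], 3, 4);
  ([[0;1;3];[0;2;2];[1;1;1];[2;3;3]], 0, 1);
  ([[0;1;3];[0;2;2];[1;1;1];[2;4;4];[3;3;4]], 0, 1);
  ([[0;1;3];[0;2;2];[1;1;2];[1;4;4];[2;3;4]], 0, 1);
  ([[0;1;3];[0;2;2];[1;1;2];[1;4;4];[3;3;4]], 0, 1);
  ([[0;1;3];[0;2;2];[1;1;2];[2;3;4];[4;4;4]], 0, 1);
  ([[0;1;3];[0;2;2];[1;1;2];[3;3;3]], 0, 1);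
  ([[0;1;3];[0;2;2];[1;1;4];[2;3;3];[3;4;4]], 0, 1);
  ([[0;1;3];[0;2;2];[1;1;4];[2;3;4]], 0, 4);
  ([[0;1;3];[0;2;2];[1;1;4];[2;4;4];[3;3;3]], 0, 1);
  ([[0;1;3];[0;2;2];[1;2;4];[2;3;3];[3;4;4]], 0, 1);
  ([[0;1;3];[0;2;2];[1;2;4];[2;3;3];[4;4;4]], 0, 1);
  ([[0;1;3];[0;2;2];[1;2;4];[3;3;4]], 0, 4);
  ([[0;1;3];[0;2;3]], 1, 2);
  ([[0;1;3];[0;2;4];[1;1;1];[2;2;3];[3;3;4]], 0, 1);
  ([[0;1;3];[0;2;4];[1;1;1];[2;3;3];[3;4;4]], 0, 1);
  ([[0;1;3];[0;2;4];[1;1;2];[1;4;4];[2;2;3]], 0, 1);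
  ([[0;1;3];[0;2;4];[1;1;2];[1;4;4];[3;3;3]], 0, 1);
  ([[0;1;3];[0;2;4];[1;1;2];[1;4;4];[3;3;4]], 0, 1);
  ([[0;1;3];[0;2;4];[1;1;2];[2;2;3];[3;3;4]], 0, 1);
  ([[0;1;3];[0;2;4];[1;1;2];[2;2;3];[4;4;4]], 0, 1);
  ([[0;1;3];[0;2;4];[1;1;2];[3;4;4]], 0, 1);
  ([[0;1;3];[0;2;4];[1;1;4];[1;2;2];[2;3;3]], 0, 1);
  ([[0;1;3];[0;2;4];[1;1;4];[1;2;2];[3;3;3]], 0, 1);
  ([[0;1;3];[0;2;4];[1;1;4];[1;2;2];[3;4;4]], 0, 1);
  ([[0;1;3];[0;2;4];[1;1;4];[2;2;2];[3;4;4]], 0, 1);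
  ([[0;1;3];[0;2;4];[1;1;4];[2;2;3]], 0, 1);
  ([[0;1;3];[0;2;4];[1;1;4];[2;3;3];[3;4;4]], 0, 1);
  ([[0;1;3];[0;2;4];[1;2;2];[2;3;3];[3;4;4]], 0, 1);
  ([[0;1;3];[0;2;4];[1;2;2];[2;3;3];[4;4;4]], 0, 1);
  ([[0;1;3];[0;2;4];[1;2;2];[3;3;4]], 0, 2);
  ([[0;1;3];[0;2;4];[1;4;4];[2;2;2];[3;3;4]], 0, 1);
  ([[0;1;3];[0;2;4];[1;4;4];[2;2;3];[3;3;4]], 0, 1);
  ([[0;1;3];[0;2;4];[1;4;4];[2;3;3]], 0, 3);
  ([[0;1;3];[0;3;3]], 1, 3);
  ([[0;1;3];[0;3;4]], 1, 4);
  ([[0;1;3];[0;4;4];[1;1;1];[2;2;4];[2;3;3]], 0, 1);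
  ([[0;1;3];[0;4;4];[1;1;1];[3;3;4]], 0, 1);
  ([[0;1;3];[0;4;4];[1;1;2];[2;2;3];[3;3;4]], 0, 1);
  ([[0;1;3];[0;4;4];[1;1;2];[2;2;4];[3;3;3]], 0, 1);
  ([[0;1;3];[0;4;4];[1;1;2];[2;3;4]], 0, 2);
  ([[0;1;3];[0;4;4];[1;1;4];[1;2;2];[2;3;3]], 0, 1);
  ([[0;1;3];[0;4;4];[1;1;4];[1;2;2];[2;3;4]], 0, 1);
  ([[0;1;3];[0;4;4];[1;1;4];[2;2;2];[2;3;4]], 0, 1);
  ([[0;1;3];[0;4;4];[1;1;4];[3;3;3]], 0, 1);
  ([[0;1;3];[0;4;4];[1;2;4];[2;2;2];[3;3;4]], 0, 1);
  ([[0;1;3];[0;4;4];[1;2;4];[2;2;3];[3;3;4]], 0, 1);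
  ([[0;1;3];[0;4;4];[1;2;4];[2;3;3]], 0, 2);
  ([[0;1;3];[1;1;3]], 0, 1);
  ([[0;1;3];[1;2;3]], 0, 2);
  ([[0;1;3];[1;3;3]], 0, 3);
  ([[0;1;3];[1;3;4]], 0, 4);
  ([[0;1;4];[0;2;2];[1;1;1];[2;3;3];[3;4;4]], 0, 1);
  ([[0;1;4];[0;2;2];[1;1;1];[2;4;4]], 0, 1);
  ([[0;1;4];[0;2;2];[1;1;2];[1;3;3];[2;3;4]], 0, 1);
  ([[0;1;4];[0;2;2];[1;1;2];[1;3;3];[3;4;4]], 0, 1);
  ([[0;1;4];[0;2;2];[1;1;2];[2;3;4];[3;3;3]], 0, 1);
  ([[0;1;4];[0;2;2];[1;1;2];[4;4;4]], 0, 1);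
  ([[0;1;4];[0;2;2];[1;1;3];[2;3;3];[4;4;4]], 0, 1);
  ([[0;1;4];[0;2;2];[1;1;3];[2;3;4]], 0, 3);
  ([[0;1;4];[0;2;2];[1;1;3];[2;4;4];[3;3;4]], 0, 1);
  ([[0;1;4];[0;2;2];[1;2;3];[2;4;4];[3;3;3]], 0, 1);
  ([[0;1;4];[0;2;2];[1;2;3];[2;4;4];[3;3;4]], 0, 1);
  ([[0;1;4];[0;2;2];[1;2;3];[3;4;4]], 0, 3);
  ([[0;1;4];[0;2;3];[1;1;1];[2;2;4];[3;4;4]], 0, 1);
  ([[0;1;4];[0;2;3];[1;1;1];[2;4;4];[3;3;4]], 0, 1);
  ([[0;1;4];[0;2;3];[1;1;2];[1;3;3];[2;2;4]], 0, 1);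
  ([[0;1;4];[0;2;3];[1;1;2];[1;3;3];[3;4;4]], 0, 1);
  ([[0;1;4];[0;2;3];[1;1;2];[1;3;3];[4;4;4]], 0, 1);
  ([[0;1;4];[0;2;3];[1;1;2];[2;2;4];[3;3;3]], 0, 1);
  ([[0;1;4];[0;2;3];[1;1;2];[2;2;4];[3;4;4]], 0, 1);
  ([[0;1;4];[0;2;3];[1;1;2];[3;3;4]], 0, 1);
  ([[0;1;4];[0;2;3];[1;1;3];[1;2;2];[2;4;4]], 0, 1);
  ([[0;1;4];[0;2;3];[1;1;3];[1;2;2];[3;3;4]], 0, 1);
  ([[0;1;4];[0;2;3];[1;1;3];[1;2;2];[4;4;4]], 0, 1);
  ([[0;1;4];[0;2;3];[1;1;3];[2;2;2];[3;3;4]], 0, 1);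
  ([[0;1;4];[0;2;3];[1;1;3];[2;2;4]], 0, 1);
  ([[0;1;4];[0;2;3];[1;1;3];[2;4;4];[3;3;4]], 0, 1);
  ([[0;1;4];[0;2;3];[1;2;2];[2;4;4];[3;3;3]], 0, 1);
  ([[0;1;4];[0;2;3];[1;2;2];[2;4;4];[3;3;4]], 0, 1);
  ([[0;1;4];[0;2;3];[1;2;2];[3;4;4]], 0, 2);
  ([[0;1;4];[0;2;3];[1;3;3];[2;2;2];[3;4;4]], 0, 1);
  ([[0;1;4];[0;2;3];[1;3;3];[2;2;4];[3;4;4]], 0, 1);
  ([[0;1;4];[0;2;3];[1;3;3];[2;4;4]], 0, 3);
  ([[0;1;4];[0;2;4]], 1, 2);
  ([[0;1;4];[0;3;3];[1;1;1];[2;2;3];[2;4;4]], 0, 1);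
  ([[0;1;4];[0;3;3];[1;1;1];[3;4;4]], 0, 1);
  ([[0;1;4];[0;3;3];[1;1;2];[2;2;3];[4;4;4]], 0, 1);
  ([[0;1;4];[0;3;3];[1;1;2];[2;2;4];[3;4;4]], 0, 1);
  ([[0;1;4];[0;3;3];[1;1;2];[2;3;4]], 0, 2);
  ([[0;1;4];[0;3;3];[1;1;3];[1;2;2];[2;3;4]], 0, 1);
  ([[0;1;4];[0;3;3];[1;1;3];[1;2;2];[2;4;4]], 0, 1);
  ([[0;1;4];[0;3;3];[1;1;3];[2;2;2];[2;3;4]], 0, 1);
  ([[0;1;4];[0;3;3];[1;1;3];[4;4;4]], 0, 1);
  ([[0;1;4];[0;3;3];[1;2;3];[2;2;2];[3;4;4]], 0, 1);
  ([[0;1;4];[0;3;3];[1;2;3];[2;2;4];[3;4;4]], 0, 1);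
  ([[0;1;4];[0;3;3];[1;2;3];[2;4;4]], 0, 2);
  ([[0;1;4];[0;3;4]], 1, 3);
  ([[0;1;4];[0;4;4]], 1, 4);
  ([[0;1;4];[1;1;4]], 0, 1);
  ([[0;1;4];[1;2;4]], 0, 2);
  ([[0;1;4];[1;3;4]], 0, 3);
  ([[0;1;4];[1;4;4]], 0, 4);
  ([[0;2;2];[0;2;3]], 2, 3);
  ([[0;2;2];[0;2;4]], 2, 4);
  ([[0;2;2];[0;3;3]], 2, 3);
  ([[0;2;2];[0;3;4];[1;1;1];[1;2;3];[2;4;4]], 0, 1);
  ([[0;2;2];[0;3;4];[1;1;1];[1;2;4];[2;3;3]], 0, 1);
  ([[0;2;2];[0;3;4];[1;1;2];[1;3;3];[4;4;4]], 0, 1);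
  ([[0;2;2];[0;3;4];[1;1;2];[1;4;4];[3;3;3]], 0, 1);
  ([[0;2;2];[0;3;4];[1;1;3];[1;2;4];[2;3;3]], 0, 1);
  ([[0;2;2];[0;3;4];[1;1;3];[1;4;4];[2;3;3]], 0, 1);
  ([[0;2;2];[0;3;4];[1;1;4];[1;2;3];[2;4;4]], 0, 1);
  ([[0;2;2];[0;3;4];[1;1;4];[1;3;3];[2;4;4]], 0, 1);
  ([[0;2;2];[0;3;4];[1;2;3];[1;4;4]], 0, 1);
  ([[0;2;2];[0;3;4];[1;2;4];[1;3;3]], 0, 1);
  ([[0;2;2];[0;3;4];[2;3;3];[4;4;4]], 0, 2);
  ([[0;2;2];[0;3;4];[2;4;4];[3;3;3]], 0, 2);
  ([[0;2;2];[0;4;4]], 2, 4);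
  ([[0;2;2];[1;2;2]], 0, 1);
  ([[0;2;2];[2;2;2]], 0, 2);
  ([[0;2;2];[2;2;3]], 0, 3);
  ([[0;2;2];[2;2;4]], 0, 4);
  ([[0;2;3];[0;2;4]], 3, 4);
  ([[0;2;3];[0;3;3]], 2, 3);
  ([[0;2;3];[0;3;4]], 2, 4);
  ([[0;2;3];[0;4;4];[1;1;1];[1;2;4];[3;3;4]], 0, 1);
  ([[0;2;3];[0;4;4];[1;1;1];[1;3;4];[2;2;4]], 0, 1);
  ([[0;2;3];[0;4;4];[1;1;2];[1;3;3];[2;2;4]], 0, 1);
  ([[0;2;3];[0;4;4];[1;1;2];[1;3;4];[2;2;4]], 0, 1);
  ([[0;2;3];[0;4;4];[1;1;3];[1;2;2];[3;3;4]], 0, 1);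
  ([[0;2;3];[0;4;4];[1;1;3];[1;2;4];[3;3;4]], 0, 1);
  ([[0;2;3];[0;4;4];[1;1;4];[1;2;2];[3;3;3]], 0, 1);
  ([[0;2;3];[0;4;4];[1;1;4];[1;3;3];[2;2;2]], 0, 1);
  ([[0;2;3];[0;4;4];[1;2;2];[1;3;4]], 0, 1);
  ([[0;2;3];[0;4;4];[1;2;4];[1;3;3]], 0, 1);
  ([[0;2;3];[0;4;4];[2;2;2];[3;3;4]], 0, 2);
  ([[0;2;3];[0;4;4];[2;2;4];[3;3;3]], 0, 2);
  ([[0;2;3];[1;2;3]], 0, 1);
  ([[0;2;3];[2;2;3]], 0, 2);
  ([[0;2;3];[2;3;3]], 0, 3);
  ([[0;2;3];[2;3;4]], 0, 4);
  ([[0;2;4];[0;3;3];[1;1;1];[1;2;3];[3;4;4]], 0, 1);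
  ([[0;2;4];[0;3;3];[1;1;1];[1;3;4];[2;2;3]], 0, 1);
  ([[0;2;4];[0;3;3];[1;1;2];[1;3;4];[2;2;3]], 0, 1);
  ([[0;2;4];[0;3;3];[1;1;2];[1;4;4];[2;2;3]], 0, 1);
  ([[0;2;4];[0;3;3];[1;1;3];[1;2;2];[4;4;4]], 0, 1);
  ([[0;2;4];[0;3;3];[1;1;3];[1;4;4];[2;2;2]], 0, 1);
  ([[0;2;4];[0;3;3];[1;1;4];[1;2;2];[3;4;4]], 0, 1);
  ([[0;2;4];[0;3;3];[1;1;4];[1;2;3];[3;4;4]], 0, 1);
  ([[0;2;4];[0;3;3];[1;2;2];[1;3;4]], 0, 1);
  ([[0;2;4];[0;3;3];[1;2;3];[1;4;4]], 0, 1);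
  ([[0;2;4];[0;3;3];[2;2;2];[3;4;4]], 0, 2);
  ([[0;2;4];[0;3;3];[2;2;3];[4;4;4]], 0, 2);
  ([[0;2;4];[0;3;4]], 2, 3);
  ([[0;2;4];[0;4;4]], 2, 4);
  ([[0;2;4];[1;2;4]], 0, 1);
  ([[0;2;4];[2;2;4]], 0, 2);
  ([[0;2;4];[2;3;4]], 0, 3);
  ([[0;2;4];[2;4;4]], 0, 4);
  ([[0;3;3];[0;3;4]], 3, 4);
  ([[0;3;3];[0;4;4]], 3, 4);
  ([[0;3;3];[1;3;3]], 0, 1);
  ([[0;3;3];[2;3;3]], 0, 2);
  ([[0;3;3];[3;3;3]], 0, 3);
  ([[0;3;3];[3;3;4]], 0, 4);
  ([[0;3;4];[0;4;4]], 3, 4);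
  ([[0;3;4];[1;3;4]], 0, 1);
  ([[0;3;4];[2;3;4]], 0, 2);
  ([[0;3;4];[3;3;4]], 0, 3);
  ([[0;3;4];[3;4;4]], 0, 4);
  ([[0;4;4];[1;4;4]], 0, 1);
  ([[0;4;4];[2;4;4]], 0, 2);
  ([[0;4;4];[3;4;4]], 0, 3);
  ([[0;4;4];[4;4;4]], 0, 4);
  ([[1;1;1];[1;1;2]], 1, 2);
  ([[1;1;1];[1;1;3]], 1, 3);
  ([[1;1;1];[1;1;4]], 1, 4);
  ([[1;1;1];[1;2;2]], 1, 2);
  ([[1;1;1];[1;2;3];[2;2;4];[3;4;4]], 1, 2);
  ([[1;1;1];[1;2;3];[2;4;4];[3;3;4]], 1, 2);
  ([[1;1;1];[1;2;4];[2;2;3];[3;3;4]], 1, 2);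
  ([[1;1;1];[1;2;4];[2;3;3];[3;4;4]], 1, 2);
  ([[1;1;1];[1;3;3]], 1, 3);
  ([[1;1;1];[1;3;4];[2;2;3];[2;4;4]], 1, 2);
  ([[1;1;1];[1;3;4];[2;2;4];[2;3;3]], 1, 2);
  ([[1;1;1];[1;4;4]], 1, 4);
  ([[1;1;1];[2;2;2]], 1, 2);
  ([[1;1;1];[3;3;3]], 1, 3);
  ([[1;1;1];[4;4;4]], 1, 4);
  ([[1;1;2];[1;1;3]], 2, 3);
  ([[1;1;2];[1;1;4]], 2, 4);
  ([[1;1;2];[1;2;2]], 1, 2);
  ([[1;1;2];[1;2;3]], 1, 3);
  ([[1;1;2];[1;2;4]], 1, 4);
  ([[1;1;2];[1;3;3];[2;2;3]], 1, 2);
  ([[1;1;2];[1;3;3];[2;2;4];[3;4;4]], 1, 2);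
  ([[1;1;2];[1;3;3];[2;3;4];[4;4;4]], 1, 2);
  ([[1;1;2];[1;3;4];[2;2;3];[4;4;4]], 1, 2);
  ([[1;1;2];[1;3;4];[2;2;4];[3;3;3]], 1, 2);
  ([[1;1;2];[1;4;4];[2;2;3];[3;3;4]], 1, 2);
  ([[1;1;2];[1;4;4];[2;2;4]], 1, 2);
  ([[1;1;2];[1;4;4];[2;3;4];[3;3;3]], 1, 2);
  ([[1;1;2];[2;2;2]], 1, 2);
  ([[1;1;2];[2;3;3]], 1, 3);
  ([[1;1;2];[2;4;4]], 1, 4);
  ([[1;1;3];[1;1;4]], 3, 4);
  ([[1;1;3];[1;2;2];[2;3;3]], 1, 2);
  ([[1;1;3];[1;2;2];[2;3;4];[4;4;4]], 1, 2);
  ([[1;1;3];[1;2;2];[2;4;4];[3;3;4]], 1, 2);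
  ([[1;1;3];[1;2;3]], 1, 2);
  ([[1;1;3];[1;2;4];[2;2;2];[3;3;4]], 1, 2);
  ([[1;1;3];[1;2;4];[2;3;3];[4;4;4]], 1, 2);
  ([[1;1;3];[1;3;3]], 1, 3);
  ([[1;1;3];[1;3;4]], 1, 4);
  ([[1;1;3];[1;4;4];[2;2;2];[2;3;4]], 1, 2);
  ([[1;1;3];[1;4;4];[2;2;4];[2;3;3]], 1, 2);
  ([[1;1;3];[1;4;4];[3;3;4]], 1, 3);
  ([[1;1;3];[2;2;3]], 1, 2);
  ([[1;1;3];[3;3;3]], 1, 3);
  ([[1;1;3];[3;4;4]], 1, 4);
  ([[1;1;4];[1;2;2];[2;3;3];[3;4;4]], 1, 2);
  ([[1;1;4];[1;2;2];[2;3;4];[3;3;3]], 1, 2);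
  ([[1;1;4];[1;2;2];[2;4;4]], 1, 2);
  ([[1;1;4];[1;2;3];[2;2;2];[3;4;4]], 1, 2);
  ([[1;1;4];[1;2;3];[2;4;4];[3;3;3]], 1, 2);
  ([[1;1;4];[1;2;4]], 1, 2);
  ([[1;1;4];[1;3;3];[2;2;2];[2;3;4]], 1, 2);
  ([[1;1;4];[1;3;3];[2;2;3];[2;4;4]], 1, 2);
  ([[1;1;4];[1;3;3];[3;4;4]], 1, 3);
  ([[1;1;4];[1;3;4]], 1, 3);
  ([[1;1;4];[1;4;4]], 1, 4);
  ([[1;1;4];[2;2;4]], 1, 2);
  ([[1;1;4];[3;3;4]], 1, 3);
  ([[1;1;4];[4;4;4]], 1, 4);
  ([[1;2;2];[1;2;3]], 2, 3);
  ([[1;2;2];[1;2;4]], 2, 4);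
  ([[1;2;2];[1;3;3]], 2, 3);
  ([[1;2;2];[1;3;4];[2;3;3];[4;4;4]], 1, 2);
  ([[1;2;2];[1;3;4];[2;4;4];[3;3;3]], 1, 2);
  ([[1;2;2];[1;4;4]], 2, 4);
  ([[1;2;2];[2;2;2]], 1, 2);
  ([[1;2;2];[2;2;3]], 1, 3);
  ([[1;2;2];[2;2;4]], 1, 4);
  ([[1;2;3];[1;2;4]], 3, 4);
  ([[1;2;3];[1;3;3]], 2, 3);
  ([[1;2;3];[1;3;4]], 2, 4);
  ([[1;2;3];[1;4;4];[2;2;2];[3;3;4]], 1, 2);
  ([[1;2;3];[1;4;4];[2;2;4];[3;3;3]], 1, 2);
  ([[1;2;3];[2;2;3]], 1, 2);
  ([[1;2;3];[2;3;3]], 1, 3);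
  ([[1;2;3];[2;3;4]], 1, 4);
  ([[1;2;4];[1;3;3];[2;2;2];[3;4;4]], 1, 2);
  ([[1;2;4];[1;3;3];[2;2;3];[4;4;4]], 1, 2);
  ([[1;2;4];[1;3;4]], 2, 3);
  ([[1;2;4];[1;4;4]], 2, 4);
  ([[1;2;4];[2;2;4]], 1, 2);
  ([[1;2;4];[2;3;4]], 1, 3);
  ([[1;2;4];[2;4;4]], 1, 4);
  ([[1;3;3];[1;3;4]], 3, 4);
  ([[1;3;3];[1;4;4]], 3, 4);
  ([[1;3;3];[2;3;3]], 1, 2);
  ([[1;3;3];[3;3;3]], 1, 3);
  ([[1;3;3];[3;3;4]], 1, 4);
  ([[1;3;4];[1;4;4]], 3, 4);
  ([[1;3;4];[2;3;4]], 1, 2);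
  ([[1;3;4];[3;3;4]], 1, 3);
  ([[1;3;4];[3;4;4]], 1, 4);
  ([[1;4;4];[2;4;4]], 1, 2);
  ([[1;4;4];[3;4;4]], 1, 3);
  ([[1;4;4];[4;4;4]], 1, 4);
  ([[2;2;2];[2;2;3]], 2, 3);
  ([[2;2;2];[2;2;4]], 2, 4);
  ([[2;2;2];[2;3;3]], 2, 3);
  ([[2;2;2];[2;4;4]], 2, 4);
  ([[2;2;2];[3;3;3]], 2, 3);
  ([[2;2;2];[4;4;4]], 2, 4);
  ([[2;2;3];[2;2;4]], 3, 4);
  ([[2;2;3];[2;3;3]], 2, 3);
  ([[2;2;3];[2;3;4]], 2, 4);
  ([[2;2;3];[2;4;4];[3;3;4]], 2, 3);
  ([[2;2;3];[3;3;3]], 2, 3);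
  ([[2;2;3];[3;4;4]], 2, 4);
  ([[2;2;4];[2;3;3];[3;4;4]], 2, 3);
  ([[2;2;4];[2;3;4]], 2, 3);
  ([[2;2;4];[2;4;4]], 2, 4);
  ([[2;2;4];[3;3;4]], 2, 3);
  ([[2;2;4];[4;4;4]], 2, 4);
  ([[2;3;3];[2;3;4]], 3, 4);
  ([[2;3;3];[2;4;4]], 3, 4);
  ([[2;3;3];[3;3;3]], 2, 3);
  ([[2;3;3];[3;3;4]], 2, 4);
  ([[2;3;4];[2;4;4]], 3, 4);
  ([[2;3;4];[3;3;4]], 2, 3);
  ([[2;3;4];[3;4;4]], 2, 4);
  ([[2;4;4];[3;4;4]], 2, 3);
  ([[2;4;4];[4;4;4]], 2, 4);
  ([[3;3;3];[3;3;4]], 3, 4);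
  ([[3;3;3];[3;4;4]], 3, 4);
  ([[3;3;3];[4;4;4]], 3, 4);
  ([[3;3;4];[3;4;4]], 3, 4);
  ([[3;3;4];[4;4;4]], 3, 4);
  ([[3;4;4];[4;4;4]], 3, 4)
])%nat.
Lemma badall_sound : Forall (fun e => forall xv, all_hold xv (fst (fst e)) -> xv (snd (fst e)) = xv (snd e)) badall.
Proof.
  unfold badall.
  repeat (apply Forall_cons; [ intros xv H; simpl in H; unfold sumc in H; simpl in H;
     repeat match goal with H : _ /\ _ |- _ => destruct H end; simpl; lra | ]).
  apply Forall_nil.
Qed.

Lemma in_allc k c : (1 <= k <= 5)%nat -> length c = 3%nat -> (forall i, In i c -> (i < k)%nat) ->
  In (csort c) (allc k).
Proof.
  intros Hk Hl Hc.
  destruct c as [|a [|b [|d [|]]]]; simpl in Hl; try discriminate.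
  pose proof allc_check_ok as H. unfold allc_check in H.
  rewrite forallb_forall in H.
  assert (Hk' : In k [1;2;3;4;5]%nat) by (simpl; lia).
  specialize (H k Hk'). rewrite forallb_forall in H.
  specialize (H a ltac:(apply in_seq; specialize (Hc a); simpl in Hc; lia)).
  rewrite forallb_forall in H.
  specialize (H b ltac:(apply in_seq; specialize (Hc b); simpl in Hc; lia)).
  rewrite forallb_forall in H.
  specialize (H d ltac:(apply in_seq; specialize (Hc d); simpl in Hc; lia)).
  apply memc_In; exact H.
Qed.

Fixpoint inserts (x : nat) (l : list nat) : list (list nat) :=
  match l with [] => [[x]] | y :: t => (x :: y :: t) :: map (cons y) (inserts x t) end.
Fixpoint permsl (l : list nat) : list (list nat) :=
  match l with [] => [[]] | x :: t => flat_map (inserts x) (permsl t) end.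
Definition perms (k : nat) := permsl (seq 0 k).

Fixpoint nodupn (l : list nat) : bool :=
  match l with [] => true | x :: t => negb (existsb (Nat.eqb x) t) && nodupn t end.
Lemma nodupn_ok l : nodupn l = true -> NoDup l.
Proof.
  induction l as [|x t IH]; simpl; intros H; constructor.
  - apply Bool.andb_true_iff in H as [H1 _]. intros Hin.
    apply Bool.negb_true_iff in H1. assert (existsb (Nat.eqb x) t = true).
    { apply existsb_exists. exists x. split; auto. apply Nat.eqb_refl. } congruence.
  - apply Bool.andb_true_iff in H as [_ H2]. auto.
Qed.

Definition permok (k : nat) (p : list nat) : bool :=
  Nat.eqb (length p) k && forallb (fun i => Nat.ltb i k) p && nodupn p
  && forallb (fun m => existsb (Nat.eqb m) p) (seq 0 k).
Definition perms_check : bool :=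
  forallb (fun k => forallb (permok k) (perms k)) [1;2;3;4;5]%nat.
Lemma perms_check_ok : perms_check = true. Proof. vm_compute. reflexivity. Qed.

Lemma perm_props k p : (1 <= k <= 5)%nat -> In p (perms k) ->
  length p = k /\ (forall i, In i p -> (i < k)%nat) /\ NoDup p /\ (forall m, (m < k)%nat -> In m p).
Proof.
  intros Hk Hp. pose proof perms_check_ok as H. unfold perms_check in H.
  rewrite forallb_forall in H.
  assert (Hk' : In k [1;2;3;4;5]%nat) by (simpl; lia).
  specialize (H k Hk'). rewrite forallb_forall in H. specialize (H p Hp).
  unfold permok in H. repeat rewrite Bool.andb_true_iff in H.
  destruct H as [[[H1 H2] H3] H4].
  repeat split.
  - apply Nat.eqb_eq; auto.
  - intros i Hi. rewrite forallb_forall in H2. apply Nat.ltb_lt. auto.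
  - apply nodupn_ok; auto.
  - intros m Hm. rewrite forallb_forall in H4.
    assert (Hm' : In m (seq 0 k)) by (apply in_seq; lia).
    specialize (H4 m Hm'). apply existsb_exists in H4 as [y [Hy Hy']].
    apply Nat.eqb_eq in Hy'. subst; auto.
Qed.

Definition relabel (p : list nat) (t : combo) : combo := csort (map (fun j => nth j p 0%nat) t).
Definition covers (k : nat) (L : list combo) : bool :=
  forallb (fun i => existsb (fun c => existsb (Nat.eqb i) c) L) (seq 0 k).
Fixpoint exl {A : Type} (f : A -> bool) (l : list A) : bool :=
  match l with [] => false | a :: t => if f a then true else exl f t end.
Lemma exl_ok {A : Type} (f : A -> bool) l : exl f l = existsb f l.
Proof. induction l as [|a t IH]; simpl; auto. destruct (f a); simpl; auto. Qed.
Definition pat := ((list nat * (list combo * list combo)) * (list combo * list combo))%type.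
Definition pats (k : nat) : list pat :=
  map (fun pr => (pr, (map (relabel (fst pr)) (fst (snd pr)), map (relabel (fst pr)) (fst (snd pr) ++ snd (snd pr)))))
  (list_prod (perms k) (map (fun r => (snd (fst r), snd r)) (filter (fun r => Nat.eqb (fst (fst r)) k) rows))).
Definition rowok (q : list combo * list combo) (L : list combo) : bool :=
  if forallb (fun t => memc t L) (fst q) then forallb (fun c => memc c (snd q)) L else false.
Definition leafok (ps : list pat) (k : nat) (L : list combo) : bool :=
  if covers k L then exl (fun pr => rowok (snd pr) L) ps else true.
Definition badin (k : nat) (bs : list (list combo * nat * nat)) (acc : list combo) : bool :=
  existsb (fun e => forallb (fun b => memc b acc) (fst (fst e)) && Nat.ltb (snd (fst e)) k
     && Nat.ltb (snd e) k && negb (Nat.eqb (snd (fst e)) (snd e))) bs.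
Fixpoint dfs (k : nat) (ps : list pat)
   (cs : list (combo * list (list combo * nat * nat))) (acc : list combo) : bool :=
  match cs with
  | [] => leafok ps k acc
  | (c, bs) :: cs' => if dfs k ps cs' acc then (if badin k bs (c :: acc) then true else dfs k ps cs' (c :: acc)) else false
  end.
Definition dfsin (k : nat) : list (combo * list (list combo * nat * nat)) :=
  map (fun c => (c, filter (fun e => ceqb (last (fst (fst e)) []) c) badall)) (allc k).
Lemma dfs1 : dfs 1 (pats 1) (dfsin 1) [] = true. Proof. vm_compute. reflexivity. Qed.
Lemma dfs2 : dfs 2 (pats 2) (dfsin 2) [] = true. Proof. vm_compute. reflexivity. Qed.
Lemma dfs3 : dfs 3 (pats 3) (dfsin 3) [] = true. Proof. vm_compute. reflexivity. Qed.
Lemma dfs4 : dfs 4 (pats 4) (dfsin 4) [] = true. Proof. vm_compute. reflexivity. Qed.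
Lemma dfs5 : dfs 5 (pats 5) (dfsin 5) [] = true. Proof. vm_compute. reflexivity. Qed.

Lemma all_hold_of xv B : (forall b, In b B -> sumc xv b = 2 * PI) -> all_hold xv B.
Proof. induction B as [|b B IH]; simpl; auto. Qed.

Lemma badin_false k bs acc (xv : nat -> R) (P : combo -> Prop) :
  (forall c, P c -> sumc xv c = 2 * PI) ->
  (forall i j, (i < k)%nat -> (j < k)%nat -> xv i = xv j -> i = j) ->
  (forall e, In e bs -> In e badall) -> (forall c, In c acc -> P c) ->
  badin k bs acc = true -> False.
Proof.
  intros HP Hinj Hbs Hacc H. unfold badin in H.
  apply existsb_exists in H as [[[B i] j] [He H]]. simpl in H.
  repeat rewrite Bool.andb_true_iff in H. destruct H as [[[H1 H2] H3] H4].
  pose proof badall_sound as S. rewrite Forall_forall in S.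
  specialize (S _ (Hbs _ He) xv). simpl in S.
  assert (Hij : xv i = xv j).
  { apply S. apply all_hold_of. intros b Hb. apply HP, Hacc.
    rewrite forallb_forall in H1. apply memc_In. auto. }
  apply Nat.ltb_lt in H2. apply Nat.ltb_lt in H3.
  apply Hinj in Hij; auto. subst. rewrite Nat.eqb_refl in H4. discriminate.
Qed.

Lemma dfs_sound k ps (xv : nat -> R) (P : combo -> Prop) :
  (forall c, P c -> sumc xv c = 2 * PI) ->
  (forall i j, (i < k)%nat -> (j < k)%nat -> xv i = xv j -> i = j) ->
  (forall c, P c \/ ~ P c) ->
  forall cs acc, dfs k ps cs acc = true ->
  (forall c bs e, In (c, bs) cs -> In e bs -> In e badall) ->
  (forall c, In c acc -> P c) ->
  exists L, (forall c, In c L <-> In c acc \/ (In c (map fst cs) /\ P c)) /\ leafok ps k L = true.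
Proof.
  intros HP Hinj Hem cs. induction cs as [|[c bs] cs IH]; intros acc H Hbs Hacc.
  - exists acc. split; auto. intros d; simpl; tauto.
  - simpl in H. destruct (dfs k ps cs acc) eqn:E1; [|discriminate].
    destruct (Hem c) as [Pc|nPc].
    + destruct (badin k bs (c :: acc)) eqn:E2.
      * exfalso. apply (badin_false k bs (c :: acc) xv P HP Hinj); auto.
        -- intros e He. apply (Hbs c bs e); simpl; auto.
        -- intros d [Hd|Hd]; [subst; auto|auto].
      * destruct (IH (c :: acc) H) as [L [HL1 HL2]].
        -- intros c' bs' e Hin He. apply (Hbs c' bs' e); simpl; auto.
        -- intros d [Hd|Hd]; [subst; auto|auto].
        -- exists L. split; auto. intros d. rewrite HL1. simpl.
           split; [intros [[Hd|Hd]|Hd]|intros [Hd|[[Hd|Hd] Hd']]]; subst; auto; tauto.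
    + destruct (IH acc E1) as [L [HL1 HL2]].
      * intros c' bs' e Hin He. apply (Hbs c' bs' e); simpl; auto.
      * auto.
      * exists L. split; auto. intros d. rewrite HL1. simpl.
        split; [intros [Hd|Hd]|intros [Hd|[[Hd|Hd] Hd']]]; subst; try tauto.
Qed.

Lemma sum_perm (l1 l2 : list R) : Permutation l1 l2 -> fold_right Rplus 0 l1 = fold_right Rplus 0 l2.
Proof. intros H; induction H; simpl; lra. Qed.

Lemma lift_list (k : nat) (xv : nat -> R) (ys : list R) :
  (forall y, In y ys -> exists i, (i < k)%nat /\ xv i = y) ->
  exists c, map xv c = ys /\ (forall i, In i c -> (i < k)%nat).
Proof.
  induction ys as [|y ys IH]; intros H.
  - exists []. simpl; split; auto. intros i [].
  - destruct (H y (or_introl eq_refl)) as [i [Hi Hy]].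
    destruct IH as [c [Hc1 Hc2]]. { intros z Hz. apply H. simpl; auto. }
    exists (i :: c). simpl. split; [congruence|]. intros j [Hj|Hj]; subst; auto.
Qed.

Lemma in_map_filter_sub {A B : Type} (l : list A) (bl : list B) (g : A -> B -> bool) c bs e :
  In (c, bs) (map (fun c => (c, filter (g c) bl)) l) -> In e bs -> In e bl.
Proof.
  intros Hin He. apply in_map_iff in Hin as [c' [Heq _]].
  injection Heq as _ Hbs. subst bs. apply filter_In in He. tauto.
Qed.
Lemma dfsin_sub k c bs e : In (c, bs) (dfsin k) -> In e bs -> In e badall.
Proof.
  exact (in_map_filter_sub (allc k) badall (fun c e => ceqb (last (fst (fst e)) []) c) c bs e).
Qed.
Lemma map_fst_pair {A B : Type} (h : A -> B) (l : list A) : map fst (map (fun c => (c, h c)) l) = l.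
Proof. induction l as [|a l IH]; simpl; congruence. Qed.
Lemma dfsin_fst k : map fst (dfsin k) = allc k.
Proof. exact (map_fst_pair (fun c => filter (fun e => ceqb (last (fst (fst e)) []) c) badall) (allc k)). Qed.

Lemma pats_in k pr : In pr (pats k) -> exists p N O,
  pr = ((p, (N, O)), (map (relabel p) N, map (relabel p) (N ++ O))) /\ In p (perms k) /\ In (k, N, O) rows.
Proof.
  unfold pats. intros Hpr. apply in_map_iff in Hpr as [[p [N O]] [Heqpr Hpr]].
  apply in_prod_iff in Hpr as [Hp HNO].
  apply in_map_iff in HNO as [[[k' N'] O'] [HeqNO Hr]]. simpl in HeqNO. injection HeqNO as <- <-.
  apply filter_In in Hr as [Hr Hk']. simpl in Hk'. apply Nat.eqb_eq in Hk'. subst k'.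
  exists p, N', O'. simpl in Heqpr. auto.
Qed.

Theorem theorem1 (V : Type) (corners : V -> list R)
  (Hpos : forall v, Forall (fun a => 0 < a) (corners v))
  (Hsum : forall v, fold_right Rplus 0 (corners v) = 2 * PI)
  (k : nat) (Hk : (1 <= k <= 5)%nat)
  (Hcount : exists l : list R, NoDup l /\ length l = k /\
              forall x, In x l <-> deg3_value corners x) :
  exists name : nat -> R,
    (forall i j, (i < k)%nat -> (j < k)%nat -> name i = name j -> i = j) /\
    (forall x, deg3_value corners x <-> exists i, (i < k)%nat /\ name i = x) /\
    exists (N O : list combo),
      In (k, N, O) rows /\
      (forall t, In t N -> occurs corners name t) /\
      (forall v, length (corners v) = 3%nat ->
         exists t, In t (N ++ O) /\ Permutation (corners v) (map name t)).
Proof.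
  destruct Hcount as [l [Hnd [Hlen Hl]]].
  set (xv := fun i => nth i l 0).
  assert (Hinj : forall i j, (i < k)%nat -> (j < k)%nat -> xv i = xv j -> i = j).
  { intros i j Hi Hj Heq. apply (proj1 (NoDup_nth l 0) Hnd); try lia. exact Heq. }
  assert (Hxin : forall y, deg3_value corners y -> exists i, (i < k)%nat /\ xv i = y).
  { intros y Hy. apply Hl in Hy. apply (In_nth l y 0) in Hy as [i [Hi Hi']].
    exists i; split; [lia|exact Hi']. }
  assert (Hval : forall i, (i < k)%nat -> deg3_value corners (xv i)).
  { intros i Hi. apply Hl. apply nth_In. lia. }
  assert (Hcorn : forall v, length (corners v) = 3%nat ->
            exists c, corners v = map xv c /\ length c = 3%nat /\ forall i, In i c -> (i < k)%nat).
  { intros v Hv. destruct (lift_list k xv (corners v)) as [c [Hc1 Hc2]].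
    - intros y Hy. apply Hxin. exists v; auto.
    - exists c. split; [auto|split; auto]. rewrite <- Hv, <- Hc1, length_map. reflexivity. }
  set (P := fun c => exists v, length (corners v) = 3%nat /\ Permutation (corners v) (map xv c)).
  assert (HP : forall c, P c -> sumc xv c = 2 * PI).
  { intros c [v [_ Hp]]. unfold sumc. rewrite <- (sum_perm _ _ Hp). apply Hsum. }
  assert (Hdfs : dfs k (pats k) (dfsin k) [] = true).
  { destruct k as [|[|[|[|[|[|k]]]]]]; try lia.
    - exact dfs1. - exact dfs2. - exact dfs3. - exact dfs4. - exact dfs5. }
  destruct (dfs_sound k (pats k) xv P HP Hinj (fun c => classic (P c)) (dfsin k) [] Hdfs)
    as [L [HL Hleaf]].
  { exact (dfsin_sub k). }
  { intros c []. }
  rewrite dfsin_fst in HL.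
  assert (HLi : forall c, In c L <-> In c (allc k) /\ P c).
  { intros c. rewrite HL. split; [intros [[]|H]; exact H|intros H; right; exact H]. }
  assert (Hvert : forall v, length (corners v) = 3%nat -> exists c, In c L /\
            Permutation (corners v) (map xv c) /\ forall i, In i c -> (i < k)%nat).
  { intros v Hv. destruct (Hcorn v Hv) as [c [Hc1 [Hc2 Hc3]]].
    assert (Hp : Permutation (corners v) (map xv (csort c))).
    { rewrite Hc1. apply Permutation_map. symmetry. apply csort_perm. }
    exists (csort c). split; [|split; auto].
    - apply HLi. split. apply in_allc; auto. exists v; auto.
    - intros i Hi. apply Hc3. apply (Permutation_in _ (csort_perm c) Hi). }
  assert (Hcov : covers k L = true).
  { unfold covers. apply forallb_forall. intros i Hi. apply in_seq in Hi.
    destruct (Hval i ltac:(lia)) as [v [Hv Hin]].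
    destruct (Hvert v Hv) as [c [HcL [Hcp Hck]]].
    apply existsb_exists. exists c. split; auto.
    apply existsb_exists. exists i. split; [|apply Nat.eqb_refl].
    apply (Permutation_in _ Hcp) in Hin. apply in_map_iff in Hin as [j [Hj1 Hj2]].
    assert (j = i) by (apply Hinj; auto; lia). subst; auto. }
  unfold leafok in Hleaf. rewrite Hcov, exl_ok in Hleaf.
  apply existsb_exists in Hleaf as [pr [Hpr Hrow]].
  destruct (pats_in k pr Hpr) as [p [N [O [Heqpr [Hp Hr]]]]]. subst pr.
  unfold rowok in Hrow. simpl in Hrow.
  destruct (forallb (fun t => memc t L) (map (relabel p) N)) eqn:HN; [|discriminate].
  rewrite forallb_forall in HN, Hrow.
  destruct (perm_props k p Hk Hp) as [Hpl [Hpk [Hpnd Hps]]].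
  assert (Hpk' : forall i, (i < k)%nat -> (nth i p 0%nat < k)%nat).
  { intros i Hi. apply Hpk. apply nth_In. lia. }
  assert (Hrel : forall t, Permutation (map xv (relabel p t)) (map (fun j => xv (nth j p 0%nat)) t)).
  { intros t. unfold relabel. rewrite <- (map_map (fun j => nth j p 0%nat) xv).
    apply Permutation_map. apply csort_perm. }
  exists (fun j => xv (nth j p 0%nat)).
  split.
  { intros i j Hi Hj Heq. apply Hinj in Heq; try (apply Hpk'; auto).
    apply (proj1 (NoDup_nth p 0%nat) Hpnd); [lia|lia|exact Heq]. }
  split.
  { intros x. split.
    - intros Hx. destruct (Hxin x Hx) as [m [Hm Hmx]].
      destruct (In_nth p m 0%nat (Hps m Hm)) as [i [Hi Hi']].
      exists i. split; [lia|]. rewrite Hi'. exact Hmx.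
    - intros [i [Hi Hx]]. subst x. apply Hval. apply Hpk'; auto. }
  exists N, O. split; [exact Hr|split].
  - intros t Ht. assert (H1 : In (relabel p t) L).
    { apply memc_In. apply HN. apply in_map; auto. }
    apply HLi in H1 as [_ [v [Hv Hperm]]].
    exists v. split; auto. eapply perm_trans; [exact Hperm|apply Hrel].
  - intros v Hv. destruct (Hvert v Hv) as [c [HcL [Hcp _]]].
    specialize (Hrow c HcL). apply memc_In in Hrow. apply in_map_iff in Hrow as [t [Ht1 Ht2]].
    exists t. split; auto. eapply perm_trans; [exact Hcp|]. rewrite <- Ht1. apply Hrel.
Qed.
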